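(* Fix $n\ge 2$, $q\in\{1,\dots,n\}$ and $c\in(0,1/2)$. For every $\varepsilon>0$ and $\eta>0$ there is an integer $R$ such that for all $r\ge R$ and all integers $p$ with $0\le p\le r-n$ and $c\le p/r\le 1-c$, \[ \mathbf{P}\left(\left|\frac{k_{p,q}(\mathrm{B}_r)}{\binom{r-n}{p}\,\mu(r,p)}-1\right|>\varepsilon\right)<\eta. \] In other words, for any sequence $\{p_r\}$ with $c\le p_r/r\le 1-c$, $k_{p_r,q}(\mathrm{B}_r)/\big(\binom{r-n}{p_r}\mu(r,p_r)\big)\to 1$ in probability as $r\to\infty$, uniformly in $p_r$.
   Context: Fix an integer $n\ge 2$. For an integer $r\ge n$ write $[r]=\{1,\dots,r\}$ and $\binom{[r]}{n-1}$ for the set of $(n-1)$-element subsets of $[r]$; elements are written $I=\{i_1<\dots<i_{n-1}\}$. A Betti table is an array of real numbers $k_{p,q}$ with columns $p=0,\dots,r-n$ and rows $q=1,\dots,n$. For $I\in\binom{[r]}{n-1}$ write $[r]\setminus I=\{d_0<d_1<\dots<d_{r-n}\}$; the pure diagram $\pi(r,I)$ is the Betti table with $k_{p,q}(\pi(r,I))=0$ if $q\neq d_p-p$, and $k_{p,d_p-p}(\pi(r,I)) = (r-n)!\cdot\prod_{0\le \ell\le r-n,\ \ell\neq p}\frac{1}{|d_\ell-d_p|}$. Let $\{\mathrm{X}_I\}_{I\in\binom{[r]}{n-1}}$ be independent random variables, each uniformly distributed on $[0,1]$, and let $\mathrm{B}_r=\sum_{I}\mathrm{X}_I\,\pi(r,I)$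 be the random Betti table, so $k_{p,q}(\mathrm{B}_r)=\sum_I \mathrm{X}_I\,k_{p,q}(\pi(r,I))$. For fixed $n$ and $q\in[1,n]$ put \[ \mu(r,p)=\frac{1}{2^n}\cdot\frac{p^{q-1}(r-p-n)^{n-q}}{(q-1)!\,(n-q)!}. \] *)

(* Defs.v *)
From Stdlib Require Import Reals Arith List Binomial.
Import ListNotations.
Open Scope R_scope.

Fixpoint choose (k : nat) (l : list nat) : list (list nat) :=
  match k, l with
  | O, _ => [ [] ]
  | S _, [] => []
  | S k', x :: l' => map (cons x) (choose k' l') ++ choose k l'
  end.

Definition subsets_r (r n : nat) : list (list nat) := choose (n - 1) (seq 1 r).

(* [r] \ I = {d_0 < d_1 < ... < d_{r-n}} *)
Definition compl_r (r : nat) (I : list nat) : list nat :=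
  filter (fun j => negb (existsb (Nat.eqb j) I)) (seq 1 r).

(* k_{p,q}(pi(r,I)) for 0 <= p <= r-n, 1 <= q <= n. *)
Definition pure_entry (r n p q : nat) (I : list nat) : R :=
  let d := compl_r r I in
  let dp := nth p d O in
  if Nat.eqb q (dp - p)%nat then
    INR (fact (r - n)) *
    fold_right Rmult 1
      (map (fun l => if Nat.eqb l p then 1
                     else / Rabs (INR (nth l d O) - INR dp))
           (seq 0 (r - n + 1)))
  else 0.

(* k_{p,q}(B_r) = sum_I X_I k_{p,q}(pi(r,I)); the random vector is x : nat -> R,
   x j being X_{I_j} where I_j is the j-th element of subsets_r r n. *)
Definition betti_rand (r n p q : nat) (x : nat -> R) : R :=
  let S := subsets_r r n in
  fold_right Rplus 0
    (map (fun j => x j * pure_entry r n p q (nth j S [])) (seq 0 (length S))).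

Definition mu (n q r p : nat) : R :=
  / 2 ^ n * (INR p ^ (q - 1) * INR (r - p - n) ^ (n - q))
    / (INR (fact (q - 1)) * INR (fact (n - q))).

(* Probability of an event for N i.i.d. uniform [0,1] variables, i.e. the
   Lebesgue (= Jordan) measure of the event in [0,1]^N, computed as the limit
   of the proportion of the m^N midpoints of the grid cells of side 1/m that
   lie in the event. *)
Fixpoint tuples (m N : nat) : list (list nat) :=
  match N with
  | O => [ [] ]
  | S N' => flat_map (fun g => map (cons g) (tuples m N')) (seq 0 m)
  end.

Definition grid_point (m : nat) (g : list nat) : nat -> R :=
  fun j => (INR (nth j g O) + / 2) / INR m.

Definition grid_frac (N : nat) (E : (nat -> R) -> bool) (m : nat) : R :=
  INR (length (filter (fun g => E (grid_point m g)) (tuples m N))) / INR m ^ N.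

Definition is_prob (N : nat) (E : (nat -> R) -> bool) (l : R) : Prop :=
  Un_cv (fun m => grid_frac N E (S m)) l.

Definition dev_event (r n p q : nat) (eps : R) : (nat -> R) -> bool :=
  fun x => if Rlt_dec eps
                (Rabs (betti_rand r n p q x / (C (r - n) p * mu n q r p) - 1))
           then true else false.

(* Main.v *)
Require Import Defs.
From Stdlib Require Import Reals Arith List Binomial Lia Lra.
Import ListNotations.
Open Scope R_scope.

Definition sumR {A} (l : list A) (f : A -> R) : R := fold_right Rplus 0 (map f l).

Lemma sumR_nil {A} (f : A -> R) : sumR [] f = 0. Proof. reflexivity. Qed.
Lemma sumR_cons {A} (a:A) l f : sumR (a::l) f = f a + sumR l f. Proof. reflexivity. Qed.
Lemma sumR_app {A} (l1 l2 : list A) f : sumR (l1++l2) f = sumR l1 f + sumR l2 f.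
Proof. induction l1 as [|a l1 IH]; simpl app; [rewrite sumR_nil; ring|].
  rewrite !sumR_cons, IH; ring. Qed.
Lemma sumR_ext {A} (l:list A) f g : (forall x, In x l -> f x = g x) -> sumR l f = sumR l g.
Proof. intros H; unfold sumR; rewrite (map_ext_in f g l H); auto. Qed.
Lemma sumR_plus {A} (l:list A) f g : sumR l (fun x => f x + g x) = sumR l f + sumR l g.
Proof. induction l as [|a l IH]; [rewrite !sumR_nil; ring|]. rewrite !sumR_cons, IH; ring. Qed.
Lemma sumR_scal {A} (l:list A) c f : sumR l (fun x => c * f x) = c * sumR l f.
Proof. induction l as [|a l IH]; [rewrite !sumR_nil; ring|]. rewrite !sumR_cons, IH; ring. Qed.
Lemma sumR_div {A} (l:list A) c f : sumR l (fun x => f x / c) = sumR l f / c.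
Proof. unfold Rdiv. rewrite Rmult_comm, <- (sumR_scal l (/c) f). apply sumR_ext; intros; ring. Qed.
Lemma sumR_div2 {A} (l:list A) c d f : sumR l f / c / d = sumR l (fun x => f x / c / d).
Proof. rewrite <- !sumR_div. reflexivity. Qed.
Lemma sumR_le {A} (l:list A) f g : (forall x, In x l -> f x <= g x) -> sumR l f <= sumR l g.
Proof. induction l as [|a l IH]; intros H; [rewrite !sumR_nil; lra|]. rewrite !sumR_cons.
  apply Rplus_le_compat; [apply H; now left| apply IH; intros; apply H; now right]. Qed.
Lemma sumR_const {A} (l:list A) c : sumR l (fun _ => c) = INR (length l) * c.
Proof. induction l as [|a l IH]; [rewrite !sumR_nil; simpl; ring|]. rewrite !sumR_cons, IH.
  simpl length; rewrite S_INR; ring. Qed.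
Lemma sumR_abs {A} (l:list A) f : Rabs (sumR l f) <= sumR l (fun x => Rabs (f x)).
Proof. induction l as [|a l IH]; [rewrite !sumR_nil, Rabs_R0; lra|]. rewrite !sumR_cons.
  eapply Rle_trans; [apply Rabs_triang|lra]. Qed.
Lemma sumR_nonneg {A} (l:list A) f : (forall x, In x l -> 0 <= f x) -> 0 <= sumR l f.
Proof. intros H. rewrite <- (sumR_nil f). replace (sumR [] f) with (sumR l (fun _ => 0)).
  apply sumR_le; auto. rewrite sumR_const, sumR_nil; ring. Qed.
Lemma sumR_flat_map {A B} (l : list A) (f : A -> list B) g :
  sumR (flat_map f l) g = sumR l (fun a => sumR (f a) g).
Proof. induction l as [|a l IH]; [reflexivity|]. simpl flat_map. rewrite sumR_app, sumR_cons, IH; ring. Qed.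
Lemma sumR_map {A B} (l:list A) (h:A->B) g : sumR (map h l) g = sumR l (fun a => g (h a)).
Proof. unfold sumR. rewrite map_map; reflexivity. Qed.
Lemma sumR_seq_S f k : sumR (seq 0 (S k)) f = sumR (seq 0 k) f + f k.
Proof. rewrite seq_S, sumR_app, sumR_cons, sumR_nil. simpl. ring. Qed.
Lemma count_sumR {A} (P : A -> bool) l :
  INR (length (filter P l)) = sumR l (fun x => if P x then 1 else 0).
Proof. induction l as [|a l IH]; [reflexivity|]. rewrite sumR_cons. simpl filter.
  destruct (P a); [simpl length; rewrite S_INR, IH; ring| rewrite IH; ring]. Qed.

Lemma sumR_tuples_S m N (f : list nat -> R) :
  sumR (tuples m (S N)) f = sumR (seq 0 m) (fun a => sumR (tuples m N) (fun g => f (a :: g))).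
Proof. simpl tuples. rewrite sumR_flat_map. apply sumR_ext; intros a _. apply sumR_map. Qed.

Lemma sumR_tuples_one m N : sumR (tuples m N) (fun _ => 1) = INR m ^ N.
Proof. induction N as [|N IH]. unfold sumR; simpl; ring. rewrite sumR_tuples_S.
  rewrite (sumR_ext _ _ (fun _ => INR m ^ N)) by (intros; apply IH).
  rewrite sumR_const, length_seq. simpl; ring. Qed.

Lemma in_tuples_length m N g : In g (tuples m N) -> length g = N.
Proof. revert g; induction N as [|N IH]; intros g Hg; simpl in Hg.
  destruct Hg as [<-|[]]; reflexivity.
  apply in_flat_map in Hg. destruct Hg as [a [_ Ha]]. apply in_map_iff in Ha.
  destruct Ha as [g' [<- Hg']]. simpl; f_equal; auto. Qed.

Fixpoint gs (w : nat -> R) (m : nat) (g : list nat) : R :=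
  match g with
  | nil => 0
  | a :: g' => w O * ((INR a + /2)/INR m) + gs (fun j => w (S j)) m g'
  end.

Definition Fr (H : R -> bool) (w : nat -> R) (t : R) (m N : nat) : R :=
  sumR (tuples m N) (fun g => if H (t + gs w m g) then 1 else 0) / INR m ^ N.

Definition xg (m a : nat) : R := (INR a + /2) / INR m.

Lemma Fr_S H w t m N : (1 <= m)%nat ->
  Fr H w t m (S N) = sumR (seq 0 m) (fun a => Fr H (fun j => w (S j)) (t + w O * xg m a) m N) / INR m.
Proof. intros Hm. assert (0 < INR m) by (apply lt_0_INR; lia).
  unfold Fr. rewrite sumR_tuples_S. rewrite <- !sumR_div.
  apply sumR_ext; intros a _. simpl gs. 
  rewrite sumR_div2, <- sumR_div. apply sumR_ext; intros g _. unfold xg. rewrite Rplus_assoc.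
  simpl pow. field. split; [apply pow_nonzero|]; lra. Qed.

Definition upclosed (H : R -> bool) := forall y z, y <= z -> H y = true -> H z = true.

Lemma Fr_bounds H w t m N : (1 <= m)%nat -> 0 <= Fr H w t m N <= 1.
Proof. intros Hm. assert (0 < INR m) by (apply lt_0_INR; lia).
  assert (0 < INR m ^ N) by (apply pow_lt; lra). unfold Fr. split.
  apply Rmult_le_pos; [apply sumR_nonneg; intros; destruct H; lra| left; apply Rinv_0_lt_compat; lra].
  apply (Rmult_le_reg_r (INR m ^ N)); [lra|]. unfold Rdiv. rewrite Rmult_assoc, Rinv_l, Rmult_1_r by lra.
  rewrite <- sumR_tuples_one. rewrite Rmult_1_l. apply sumR_le; intros; destruct H; lra. Qed.

Lemma Fr_mono H w t t' m N : upclosed H -> t <= t' -> Fr H w t m N <= Fr H w t' m N.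
Proof. intros HH Ht. unfold Fr, Rdiv. apply Rmult_le_compat_r.
  - assert (0 <= INR m ^ N) by (apply pow_le, pos_INR).
    destruct (Req_dec (INR m ^ N) 0) as [E|E]; [rewrite E, Rinv_0; lra|left; apply Rinv_0_lt_compat; lra].
  - apply sumR_le; intros. destruct (H (t + _)) eqn:E1;
    [rewrite (HH _ _ (Rplus_le_compat_r _ _ _ Ht) E1); lra|destruct (H (t' + _)); lra]. Qed.

Lemma telescope h k : sumR (seq 0 k) (fun a => h (S a) - h a) = h k - h O.
Proof. induction k as [|k IH]. simpl; unfold sumR; simpl; ring.
  rewrite sumR_seq_S, IH; ring. Qed.

Lemma regroup a b h : (b <> 0)%nat ->
  sumR (seq 0 (a*b)) (fun i => h (i / b)%nat) = INR b * sumR (seq 0 a) h.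
Proof. intros Hb. induction a as [|a IH]. simpl; unfold sumR; simpl; ring.
  rewrite Nat.mul_succ_l, seq_app, sumR_app, IH, sumR_seq_S.
  rewrite (sumR_ext (seq (0 + a*b) b) _ (fun _ => h a)). rewrite sumR_const, length_seq; ring.
  intros i Hi. apply in_seq in Hi. f_equal.
  replace i with (a * b + (i - a*b))%nat by lia. rewrite Nat.div_add_l by auto.
  rewrite Nat.div_small by lia. lia. Qed.

Definition Mid (m : nat) (f : R -> R) := sumR (seq 0 m) (fun a => f ((INR a + /2)/INR m)) / INR m.
Definition Low (m : nat) (f : R -> R) := sumR (seq 0 m) (fun a => f (INR a/INR m)) / INR m.
Definition Up (m : nat) (f : R -> R) := sumR (seq 0 m) (fun a => f ((INR a + 1)/INR m)) / INR m.

Definition monoF (f : R -> R) := forall x y, 0 <= x -> x <= y -> y <= 1 -> f x <= f y.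
Definition bndF (f : R -> R) := forall x, 0 <= x <= 1 -> 0 <= f x <= 1.

Lemma INR_a_lt a m : (a < m)%nat -> INR a + 1 <= INR m.
Proof. intros H. rewrite <- S_INR. apply le_INR; lia. Qed.

Lemma low_mid_up f m : monoF f -> (1 <= m)%nat -> Low m f <= Mid m f <= Up m f.
Proof. intros Hf Hm. assert (0 < INR m) by (apply lt_0_INR; lia).
  unfold Low, Mid, Up, Rdiv. split; apply Rmult_le_compat_r; try (left; apply Rinv_0_lt_compat; lra);
  apply sumR_le; intros a Ha; apply in_seq in Ha; assert (Ha' := INR_a_lt a m ltac:(lia));
  assert (0 <= INR a) by apply pos_INR; apply Hf.
  all: try (apply Rmult_le_pos; [lra| left; apply Rinv_0_lt_compat; lra]).
  all: try (apply Rmult_le_compat_r; [left; apply Rinv_0_lt_compat; lra| lra]).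
  all: apply (Rmult_le_reg_r (INR m)); [lra|]; rewrite Rmult_assoc, Rinv_l; lra. Qed.

Lemma sumR_minus {A} (l:list A) f g : sumR l (fun x => f x - g x) = sumR l f - sumR l g.
Proof. induction l as [|a l IH]; [unfold sumR; simpl; ring|]. rewrite !sumR_cons, IH; ring. Qed.

Lemma up_low f m : monoF f -> bndF f -> (1 <= m)%nat -> Up m f - Low m f <= / INR m.
Proof. intros Hf Hb Hm. assert (0 < INR m) by (apply lt_0_INR; lia).
  unfold Up, Low. rewrite <- Rdiv_minus_distr, <- sumR_minus.
  rewrite (sumR_ext _ _ (fun a => (fun k => f (INR k / INR m)) (S a) - (fun k => f (INR k / INR m)) a)).
  2:{ intros; cbv beta. rewrite S_INR. reflexivity. }
  rewrite (telescope (fun k => f (INR k / INR m)) m). cbv beta. replace (INR m / INR m) with 1 by (field; lra). simpl INR.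
  replace (0 / INR m) with 0 by (field; lra).
  destruct (Hb 1) as [_ H1]; [lra|]. destruct (Hb 0) as [H0' _]; [lra|].
  unfold Rdiv. rewrite <- (Rmult_1_l (/ INR m)) at 2. apply Rmult_le_compat_r; [left; apply Rinv_0_lt_compat; lra| lra]. Qed.

Lemma low_le_up f m m' : monoF f -> (1 <= m)%nat -> (1 <= m')%nat -> Low m f <= Up m' f.
Proof. intros Hf Hm Hm'. assert (0 < INR m) by (apply lt_0_INR; lia).
  assert (0 < INR m') by (apply lt_0_INR; lia).
  assert (Hmm: 0 < INR m * INR m') by (apply Rmult_lt_0_compat; lra).
  apply (Rmult_le_reg_r (INR m * INR m')); [lra|]. unfold Low, Up.
  replace (sumR (seq 0 m) (fun a => f (INR a / INR m)) / INR m * (INR m * INR m'))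
    with (INR m' * sumR (seq 0 m) (fun a => f (INR a / INR m))) by (field; lra).
  replace (sumR (seq 0 m') (fun a => f ((INR a + 1) / INR m')) / INR m' * (INR m * INR m'))
    with (INR m * sumR (seq 0 m') (fun a => f ((INR a + 1) / INR m'))) by (field; lra).
  rewrite <- (regroup m m' (fun a => f (INR a / INR m))) by lia.
  rewrite <- (regroup m' m (fun a => f ((INR a + 1) / INR m'))) by lia.
  rewrite (Nat.mul_comm m' m).
  apply sumR_le; intros i Hi. apply in_seq in Hi.
  assert (Hi' : (i < m * m')%nat) by lia.
  assert (A1 : (m' * (i / m') <= i)%nat) by (apply Nat.Div0.mul_div_le).
  assert (A2 : (i < m * S (i / m))%nat) by (apply Nat.mul_succ_div_gt; lia).
  assert (A3 : (S (i / m) <= m')%nat) by (apply Nat.Div0.div_lt_upper_bound; lia).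
  apply le_INR in A1. apply lt_INR in A2. apply le_INR in A3. rewrite S_INR in A3. rewrite mult_INR in A1, A2.
  rewrite S_INR in A2. assert (B := pos_INR (i / m')). assert (B2 := pos_INR i).
  apply lt_INR in Hi'. rewrite mult_INR in Hi'.
  apply Rle_trans with (f (INR i / (INR m * INR m'))); apply Hf.
  - apply Rmult_le_pos; [lra| left; apply Rinv_0_lt_compat; lra].
  - apply (Rmult_le_reg_r (INR m * INR m')); [lra|].
    replace (INR (i / m') / INR m * (INR m * INR m')) with (INR m' * INR (i / m')) by (field; lra).
    replace (INR i / (INR m * INR m') * (INR m * INR m')) with (INR i) by (field; lra). lra.
  - apply (Rmult_le_reg_r (INR m * INR m')); [lra|].
    replace (INR i / (INR m * INR m') * (INR m * INR m')) with (INR i) by (field; lra). lra.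
  - apply Rmult_le_pos; [lra| left; apply Rinv_0_lt_compat; lra].
  - apply (Rmult_le_reg_r (INR m * INR m')); [lra|].
    replace (INR i / (INR m * INR m') * (INR m * INR m')) with (INR i) by (field; lra).
    replace ((INR (i / m) + 1) / INR m' * (INR m * INR m')) with (INR m * (INR (i / m) + 1)) by (field; lra). lra.
  - apply (Rmult_le_reg_r (INR m')); [lra|].
    replace ((INR (i / m) + 1) / INR m' * INR m') with (INR (i / m) + 1) by (field; lra). lra.
Qed.

Lemma mid_cauchy f m m' : monoF f -> bndF f -> (1 <= m)%nat -> (1 <= m')%nat ->
  Rabs (Mid m f - Mid m' f) <= / INR m + / INR m'.
Proof. intros Hf Hb Hm Hm'.
  destruct (low_mid_up f m Hf Hm). destruct (low_mid_up f m' Hf Hm').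
  assert (X1 := up_low f m Hf Hb Hm). assert (X2 := up_low f m' Hf Hb Hm').
  assert (X3 := low_le_up f m m' Hf Hm Hm'). assert (X4 := low_le_up f m' m Hf Hm' Hm).
  apply Rabs_le; lra. Qed.

Lemma inv_le_M m M : (1 <= M)%nat -> (M <= m)%nat -> / INR m <= / INR M.
Proof. intros. apply Rinv_le_contravar. apply lt_0_INR; lia. apply le_INR; lia. Qed.

Lemma avg_close (m : nat) g1 g2 e : (1 <= m)%nat -> (forall a, (a < m)%nat -> Rabs (g1 a - g2 a) <= e) ->
  Rabs (sumR (seq 0 m) g1 / INR m - sumR (seq 0 m) g2 / INR m) <= e.
Proof. intros Hm H. assert (0 < INR m) by (apply lt_0_INR; lia).
  rewrite <- Rdiv_minus_distr, <- sumR_minus. unfold Rdiv. rewrite Rabs_mult, Rabs_inv, (Rabs_pos_eq (INR m)) by lra.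
  apply (Rmult_le_reg_r (INR m)); [lra|]. rewrite Rmult_assoc, Rinv_l, Rmult_1_r by lra.
  eapply Rle_trans; [apply sumR_abs|]. rewrite <- (length_seq m 0) at 2. rewrite Rmult_comm, <- sumR_const.
  apply sumR_le; intros a Ha; apply in_seq in Ha; apply H; lia. Qed.

Lemma Fr_cauchy N : forall w H, (forall j, 0 <= w j) -> upclosed H -> forall eps, 0 < eps ->
  exists M, (1 <= M)%nat /\ forall m m' t, (M <= m)%nat -> (M <= m')%nat ->
    Rabs (Fr H w t m N - Fr H w t m' N) <= eps.
Proof. induction N as [|N IH]; intros w H Hw HH eps Heps.
  - exists 1%nat; split; [lia|]. intros m m' t _ _. unfold Fr. simpl. unfold sumR; simpl.
    rewrite Rminus_diag, Rabs_R0; lra.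
  - destruct (IH (fun j => w (S j)) H (fun j => Hw (S j)) HH (eps/3)) as [M0 [HM0 HIH]]; [lra|].
    destruct (archimed_cor1 (eps/6)) as [M1 [HM1 HM1']]; [lra|].
    exists (Nat.max M0 M1); split; [lia|]. intros m m' t Hm Hm'.
    set (f := fun x => Fr H (fun j => w (S j)) (t + w O * x) M0 N).
    assert (Hf : monoF f). { intros x y Hx Hxy Hy. unfold f. apply Fr_mono; auto.
      apply Rplus_le_compat_l, Rmult_le_compat_l; auto. }
    assert (Hb : bndF f). { intros x _. apply Fr_bounds; auto. }
    assert (E : forall k, (M0 <= k)%nat -> Rabs (Fr H w t k (S N) - Mid k f) <= eps/3).
    { intros k Hk. rewrite Fr_S by lia. unfold Mid. apply avg_close; [lia|].
      intros a _. unfold f, xg. apply HIH; lia. }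
    assert (E1 := E m ltac:(lia)). assert (E2 := E m' ltac:(lia)).
    assert (E3 := mid_cauchy f m m' Hf Hb ltac:(lia) ltac:(lia)).
    assert (I1 := inv_le_M m M1 ltac:(lia) ltac:(lia)).
    assert (I2 := inv_le_M m' M1 ltac:(lia) ltac:(lia)).
    rewrite Rabs_minus_sym in E2.
    replace (Fr H w t m (S N) - Fr H w t m' (S N)) with
      ((Fr H w t m (S N) - Mid m f) + (Mid m f - Mid m' f) + (Mid m' f - Fr H w t m' (S N))) by ring.
    eapply Rle_trans; [apply Rabs_triang|]. eapply Rle_trans; [apply Rplus_le_compat_r, Rabs_triang|].
    lra.
Qed.

Lemma sumR_seq_shift (w : nat -> R) N : sumR (seq 0 (S N)) w = w O + sumR (seq 0 N) (fun j => w (S j)).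
Proof. simpl seq. rewrite sumR_cons, <- seq_shift, sumR_map. reflexivity. Qed.

Lemma sum_xg m : (1 <= m)%nat -> sumR (seq 0 m) (fun a => xg m a) = INR m / 2.
Proof. intros Hm. assert (0 < INR m) by (apply lt_0_INR; lia). unfold xg. rewrite sumR_div.
  assert (forall k, sumR (seq 0 k) (fun a => INR a + /2) = INR k * INR k / 2).
  { induction k as [|k IH]. unfold sumR; simpl; field. rewrite sumR_seq_S, IH, S_INR. field. }
  rewrite H0. field. lra. Qed.

Lemma sum_xg2 m : (1 <= m)%nat -> sumR (seq 0 m) (fun a => xg m a ^ 2) = INR m / 3 - / (12 * INR m).
Proof. intros Hm. assert (0 < INR m) by (apply lt_0_INR; lia).
  rewrite (sumR_ext _ _ (fun a => (INR a + /2)^2 / (INR m ^ 2))).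
  2:{ intros; unfold xg; field; lra. }
  rewrite sumR_div.
  assert (forall k, sumR (seq 0 k) (fun a => (INR a + /2)^2) = (4 * INR k ^ 3 - INR k) / 12).
  { induction k as [|k IH]. unfold sumR; simpl; field. rewrite sumR_seq_S, IH, S_INR. field. }
  rewrite H0. field. lra. Qed.

Definition Q2 (w : nat -> R) (c : R) (m N : nat) := sumR (tuples m N) (fun g => (gs w m g - c)^2).
Definition vm (m : nat) := / 12 - / (12 * INR m ^ 2).

Lemma Q2_formula N : forall w c m, (1 <= m)%nat ->
  Q2 w c m N = INR m ^ N * ((sumR (seq 0 N) w / 2 - c)^2 + sumR (seq 0 N) (fun j => w j ^ 2) * vm m).
Proof. induction N as [|N IH]; intros w c m Hm.
  - unfold Q2, sumR; simpl. field.
  - assert (0 < INR m) by (apply lt_0_INR; lia). unfold Q2. rewrite sumR_tuples_S.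
    rewrite (sumR_ext _ _ (fun a => Q2 (fun j => w (S j)) (c - w O * xg m a) m N)).
    2:{ intros a _. unfold Q2. apply sumR_ext; intros g _. simpl gs. unfold xg. ring. }
    rewrite (sumR_ext _ _ (fun a => (INR m ^ N * ((sumR (seq 0 N) (fun j => w (S j)) / 2 - c) ^ 2 +
        sumR (seq 0 N) (fun j => w (S j) ^ 2) * vm m)) +
        (INR m ^ N * 2 * (sumR (seq 0 N) (fun j => w (S j)) / 2 - c) * w O) * xg m a +
        (INR m ^ N * w O ^ 2) * xg m a ^ 2)).
    2:{ intros a _. rewrite IH by auto. ring. }
    rewrite !sumR_plus, !sumR_scal, sumR_const, length_seq, sum_xg, sum_xg2 by auto.
    rewrite !sumR_seq_shift. unfold vm. simpl pow. field. lra.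
Qed.

Lemma cheb {A} (l : list A) (P : A -> bool) h e :
  (forall g, In g l -> P g = true -> e <= h g) -> (forall g, In g l -> 0 <= h g) -> 0 <= e ->
  e * sumR l (fun g => if P g then 1 else 0) <= sumR l h.
Proof. intros H1 H2 He. rewrite <- sumR_scal. apply sumR_le; intros g Hg.
  destruct (P g) eqn:E. rewrite Rmult_1_r; auto. rewrite Rmult_0_r; auto. Qed.

Lemma gs_betti (w : nat -> R) m g :
  fold_right Rplus 0 (map (fun j => grid_point m g j * w j) (seq 0 (length g))) = gs w m g.
Proof. revert w; induction g as [|a g IH]; intros w. reflexivity.
  simpl length. change (fold_right Rplus 0 (map (fun j => grid_point m (a :: g) j * w j) (seq 0 (S (length g)))))
    with (sumR (seq 0 (S (length g))) (fun j => grid_point m (a :: g) j * w j)).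
  rewrite sumR_seq_shift. simpl gs. rewrite <- (IH (fun j => w (S j))). unfold grid_point. simpl.
  unfold sumR. ring. Qed.

Lemma abs_event y K eps : 0 < K -> 0 < eps ->
  (eps < Rabs (y / K - 1) <-> K * (1 + eps) < y \/ y < K * (1 - eps)).
Proof. intros HK He. assert (Ey : y = K * (y / K)) by (field; lra). set (z := y / K) in *.
  rewrite Ey. split.
  - intros Hz. destruct (Rcase_abs (z - 1)) as [Hn|Hp].
    + rewrite Rabs_left in Hz by lra. right. apply Rmult_lt_compat_l; lra.
    + rewrite Rabs_right in Hz by lra. left. apply Rmult_lt_compat_l; lra.
  - intros [Hz|Hz].
    + apply Rmult_lt_reg_l in Hz; auto. rewrite Rabs_right; lra.
    + apply Rmult_lt_reg_l in Hz; auto. rewrite Rabs_left; lra.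
Qed.

Lemma Rabs_le_inv' x a : Rabs x <= a -> -a <= x <= a.
Proof. intros H. split; [generalize (Rle_abs (-x)); rewrite Rabs_Ropp; lra | generalize (Rle_abs x); lra]. Qed.

Lemma Rcv_const B : Un_cv (fun _ => B) B.
Proof. intros e He. exists O. intros. rewrite R_dist_eq. auto. Qed.

Lemma prob_bound N (w : nat -> R) (L : (nat -> R) -> R) (E : (nat -> R) -> bool) K eps :
  (forall j, 0 <= w j) -> 0 < K -> 0 < eps ->
  (forall m g, length g = N -> L (grid_point m g) = gs w m g) ->
  (forall x, E x = if Rlt_dec eps (Rabs (L x / K - 1)) then true else false) ->
  exists l, is_prob N E l /\
    l <= ((sumR (seq 0 N) w / 2 - K)^2 + sumR (seq 0 N) (fun j => w j ^ 2) / 12) / (eps * K)^2.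
Proof.
  intros Hw HK He HL HE.
  set (H1 := fun y => if Rlt_dec (K * (1 + eps)) y then true else false).
  set (H3 := fun y => if Rle_dec (K * (1 - eps)) y then true else false).
  assert (U1 : upclosed H1). { intros y z Hyz; unfold H1. destruct (Rlt_dec _ y); destruct (Rlt_dec _ z); auto; lra. }
  assert (U3 : upclosed H3). { intros y z Hyz; unfold H3. destruct (Rle_dec _ y); destruct (Rle_dec _ z); auto; lra. }
  assert (Hind : forall m g, length g = N -> (if E (grid_point m g) then 1 else 0) =
     (if H1 (0 + gs w m g) then 1 else 0) + 1 - (if H3 (0 + gs w m g) then 1 else 0)).
  { intros m g Hg. rewrite HE, HL by auto. rewrite Rplus_0_l. unfold H1, H3.
    assert (AE := abs_event (gs w m g) K eps HK He).
    assert (Hlt: K*(1-eps) < K*(1+eps)) by nra. destruct AE as [AE1 AE2].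
    destruct (Rlt_dec eps _) as [A|A]; destruct (Rlt_dec _ (gs w m g)) as [B|B];
    destruct (Rle_dec _ (gs w m g)) as [C|C]; try lra;
    try apply Rnot_le_lt in C; try apply Rnot_lt_le in B;
    first [lra | exfalso; apply A; apply AE2; auto | specialize (AE1 A); lra]. }
  assert (Hgf : forall m, (1 <= m)%nat -> grid_frac N E m = Fr H1 w 0 m N + 1 - Fr H3 w 0 m N).
  { intros m Hm. assert (0 < INR m ^ N) by (apply pow_lt, lt_0_INR; lia).
    unfold grid_frac, Fr. rewrite count_sumR.
    rewrite (sumR_ext _ _ (fun g => (if H1 (0 + gs w m g) then 1 else 0) + 1 - (if H3 (0 + gs w m g) then 1 else 0))).
    2:{ intros g Hg. apply Hind. eapply in_tuples_length; eauto. }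
    rewrite sumR_minus, sumR_plus, sumR_tuples_one. field. lra. }
  assert (Cc : Cauchy_crit (fun m => grid_frac N E (S m))).
  { intros e Hep. destruct (Fr_cauchy N w H1 Hw U1 (e/3)) as [M1 [_ HM1]]; [lra|].
    destruct (Fr_cauchy N w H3 Hw U3 (e/3)) as [M3 [_ HM3]]; [lra|].
    exists (Nat.max M1 M3). intros a b Ha Hb. unfold R_dist. rewrite !Hgf by lia.
    assert (X1 := HM1 (S a) (S b) 0 ltac:(lia) ltac:(lia)).
    assert (X3 := HM3 (S a) (S b) 0 ltac:(lia) ltac:(lia)).
    apply Rabs_le_inv' in X1. apply Rabs_le_inv' in X3. apply Rabs_def1; lra. }
  destruct (R_complete _ Cc) as [l Hl]. exists l. split; [exact Hl|].
  eapply Rle_cv_lim; [|exact Hl|apply Rcv_const]. intros k. cbv beta.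
  set (m := S k). assert (Hm : (1 <= m)%nat) by (unfold m; lia).
  assert (Hm0 : 0 < INR m) by (apply lt_0_INR; lia). assert (HmN : 0 < INR m ^ N) by (apply pow_lt; lra).
  assert (HeK : 0 < (eps * K)^2) by (apply pow_lt, Rmult_lt_0_compat; lra).
  unfold grid_frac. rewrite count_sumR.
  assert (Ch := cheb (tuples m N) (fun g => E (grid_point m g)) (fun g => (gs w m g - K)^2) ((eps * K)^2)).
  fold (Q2 w K m N) in Ch. rewrite Q2_formula in Ch by auto.
  assert (Hv : vm m <= / 12). { unfold vm. assert (0 < / (12 * INR m ^ 2)) by (apply Rinv_0_lt_compat, Rmult_lt_0_compat, pow_lt; lra). lra. }
  assert (HV : 0 <= sumR (seq 0 N) (fun j => w j ^ 2)) by (apply sumR_nonneg; intros; apply pow2_ge_0).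
  assert (Ch2 : (eps * K) ^ 2 * sumR (tuples m N) (fun g => if E (grid_point m g) then 1 else 0) <=
     INR m ^ N * ((sumR (seq 0 N) w / 2 - K) ^ 2 + sumR (seq 0 N) (fun j => w j ^ 2) / 12)).
  { eapply Rle_trans; [apply Ch|].
    - intros g Hg HEg. rewrite HE, HL in HEg by (eapply in_tuples_length; eauto).
      destruct (Rlt_dec _ _) as [A|A]; [|discriminate]. apply abs_event in A; auto.
      assert (0 < eps * K) by nra. simpl. destruct A as [A|A]; nra.
    - intros; apply pow2_ge_0.
    - lra.
    - apply Rmult_le_compat_l; [lra|]. apply Rplus_le_compat_l. apply Rmult_le_compat_l; auto. }
  apply (Rmult_le_reg_l ((eps * K)^2 * INR m ^ N)). apply Rmult_lt_0_compat; lra.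
  replace ((eps * K) ^ 2 * INR m ^ N * (sumR (tuples m N) (fun g => if E (grid_point m g) then 1 else 0) / INR m ^ N))
    with ((eps * K) ^ 2 * sumR (tuples m N) (fun g => if E (grid_point m g) then 1 else 0)) by (field; lra).
  replace ((eps * K) ^ 2 * INR m ^ N * (((sumR (seq 0 N) w / 2 - K) ^ 2 + sumR (seq 0 N) (fun j => w j ^ 2) / 12) / (eps * K) ^ 2))
    with (INR m ^ N * ((sumR (seq 0 N) w / 2 - K) ^ 2 + sumR (seq 0 N) (fun j => w j ^ 2) / 12)) by (field; lra).
  exact Ch2.
Qed.

Definition prodR {A} (l : list A) (f : A -> R) : R := fold_right Rmult 1 (map f l).
Lemma prodR_nil {A} (f : A -> R) : prodR [] f = 1. Proof. reflexivity. Qed.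
Lemma prodR_cons {A} (a:A) l f : prodR (a::l) f = f a * prodR l f. Proof. reflexivity. Qed.
Lemma prodR_app {A} (l1 l2 : list A) f : prodR (l1++l2) f = prodR l1 f * prodR l2 f.
Proof. induction l1 as [|a l1 IH]; simpl app; [rewrite prodR_nil; ring|].
  rewrite !prodR_cons, IH; ring. Qed.
Lemma prodR_ext {A} (l:list A) f g : (forall x, In x l -> f x = g x) -> prodR l f = prodR l g.
Proof. intros H; unfold prodR; rewrite (map_ext_in f g l H); auto. Qed.
Lemma prodR_nonneg {A} (l:list A) f : (forall x, In x l -> 0 <= f x) -> 0 <= prodR l f.
Proof. induction l as [|a l IH]; intros H; [rewrite prodR_nil; lra|]. rewrite prodR_cons.
  apply Rmult_le_pos; [apply H; now left|apply IH; intros; apply H; now right]. Qed.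
Lemma prodR_le_pow {A} (l:list A) f M : (forall x, In x l -> 0 <= f x <= M) -> prodR l f <= M ^ length l.
Proof. induction l as [|a l IH]; intros H; [rewrite prodR_nil; simpl; lra|]. rewrite prodR_cons.
  simpl length. simpl pow. assert (Ha := H a (or_introl eq_refl)).
  apply Rmult_le_compat; try lra. apply prodR_nonneg; intros; apply H; now right.
  apply IH; intros; apply H; now right. Qed.
Lemma prodR_mult {A} (l:list A) f g : prodR l (fun x => f x * g x) = prodR l f * prodR l g.
Proof. induction l as [|a l IH]; [rewrite !prodR_nil; ring|]. rewrite !prodR_cons, IH; ring. Qed.
Lemma prodR_inv {A} (l:list A) f : prodR l (fun x => / f x) = / prodR l f.
Proof. induction l as [|a l IH]; [rewrite !prodR_nil; now rewrite Rinv_1|]. rewrite !prodR_cons, IH.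
  now rewrite Rinv_mult. Qed.

Definition ee (k : nat) (l : list nat) (u : nat -> R) : R := sumR (choose k l) (fun I => prodR I u).

Lemma ee_0 l u : ee 0 l u = 1.
Proof. destruct l; unfold ee; simpl; unfold sumR; simpl; rewrite prodR_nil; ring. Qed.
Lemma ee_S_nil k u : ee (S k) [] u = 0. Proof. reflexivity. Qed.
Lemma ee_S_cons k x l u : ee (S k) (x::l) u = u x * ee k l u + ee (S k) l u.
Proof. unfold ee. simpl choose. rewrite sumR_app, sumR_map. f_equal.
  rewrite <- sumR_scal. apply sumR_ext; intros; rewrite prodR_cons; ring. Qed.

Lemma bern_up a b k : 0 <= a -> 0 <= b -> b ^ S k + INR (S k) * a * b ^ k <= (a + b) ^ S k.
Proof. intros Ha Hb. induction k as [|k IH]. simpl; lra.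
  assert (0 <= b ^ k) by (apply pow_le; lra). assert (0 <= b ^ S k) by (apply pow_le; lra).
  change ((a+b)^S (S k)) with ((a+b) * (a+b)^S k). rewrite S_INR.
  change (b ^ S (S k)) with (b * b ^ S k). change (b ^ S k) with (b * b ^ k) in *.
  rewrite S_INR in IH. assert (0 <= INR k) by apply pos_INR.
  assert (X := Rmult_le_compat_l (a+b) _ _ ltac:(lra) IH).
  assert (0 <= (INR k + 1) * (a * a) * b ^ k) by (apply Rmult_le_pos; [apply Rmult_le_pos; nra|auto]). rewrite S_INR. nra. Qed.

Lemma bern_lo a b k : 0 <= a -> 0 <= b -> (a + b) ^ S k <= b ^ S k + INR (S k) * a * (a + b) ^ k.
Proof. intros Ha Hb. induction k as [|k IH]. simpl; lra.
  assert (0 <= (a+b) ^ k) by (apply pow_le; lra). assert (b ^ S k <= (a+b) ^ S k) by (apply pow_incr; lra).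
  change ((a+b)^S (S k)) with ((a+b) * (a+b)^S k). rewrite S_INR.
  change (b ^ S (S k)) with (b * b ^ S k). rewrite S_INR in IH. assert (0 <= INR k) by apply pos_INR.
  assert (X := Rmult_le_compat_l (a+b) _ _ ltac:(lra) IH).
  assert (Y := Rmult_le_compat_l a _ _ Ha H0).
  rewrite S_INR. 
  change ((a+b)^S k) with ((a+b) * (a+b)^k) in *. nra. Qed.

Lemma ee_nonneg k l u : (forall x, In x l -> 0 <= u x) -> 0 <= ee k l u.
Proof. revert k; induction l as [|x l IH]; intros k H; destruct k.
  all: try (rewrite ee_0; lra). rewrite ee_S_nil; lra.
  rewrite ee_S_cons. assert (0 <= u x) by (apply H; now left).
  assert (0 <= ee k l u) by (apply IH; intros; apply H; now right).
  assert (0 <= ee (S k) l u) by (apply IH; intros; apply H; now right). nra. Qed.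

Lemma ee_upper l : forall k u, (forall x, In x l -> 0 <= u x) ->
  INR (fact k) * ee k l u <= (sumR l u) ^ k.
Proof. induction l as [|x l IH]; intros k u H; destruct k.
  - rewrite ee_0; simpl; lra.
  - rewrite ee_S_nil, sumR_nil. simpl. lra.
  - rewrite ee_0; simpl; lra.
  - rewrite ee_S_cons, sumR_cons. assert (Hx : 0 <= u x) by (apply H; now left).
    assert (H' : forall y, In y l -> 0 <= u y) by (intros; apply H; now right).
    assert (Hs : 0 <= sumR l u) by (apply sumR_nonneg; auto).
    assert (I1 := IH k u H'). assert (I2 := IH (S k) u H').
    assert (B := bern_up (u x) (sumR l u) k Hx Hs).
    change (fact (S k)) with (S k * fact k)%nat. rewrite mult_INR.
    assert (0 <= INR (S k)) by apply pos_INR.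
    replace (INR (S k) * INR (fact k) * (u x * ee k l u + ee (S k) l u)) with
      (INR (S k) * u x * (INR (fact k) * ee k l u) + INR (S k) * INR (fact k) * ee (S k) l u) by ring.
    rewrite <- mult_INR. change (S k * fact k)%nat with (fact (S k)).
    apply Rle_trans with (INR (S k) * u x * sumR l u ^ k + sumR l u ^ S k); [|lra].
    apply Rplus_le_compat; auto. apply Rmult_le_compat_l; auto. apply Rmult_le_pos; auto.
Qed.

Lemma ee_lower l : forall k u M, 0 <= M -> (forall x, In x l -> 0 <= u x <= M) ->
  (Rmax 0 (sumR l u - INR k * M)) ^ k <= INR (fact k) * ee k l u.
Proof. induction l as [|x l IH]; intros k u M HM H; destruct k.
  - rewrite ee_0; simpl; lra.
  - rewrite ee_S_nil, sumR_nil. rewrite Rmax_left. simpl; lra.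
    assert (0 <= INR (S k) * M) by (apply Rmult_le_pos; auto; apply pos_INR). lra.
  - rewrite ee_0; simpl; lra.
  - rewrite ee_S_cons, sumR_cons. assert (Hx : 0 <= u x <= M) by (apply H; now left).
    assert (H' : forall y, In y l -> 0 <= u y <= M) by (intros; apply H; now right).
    assert (I1 := IH k u M HM H'). assert (I2 := IH (S k) u M HM H').
    set (s := sumR l u) in *. set (b := s - INR (S k) * M) in *.
    assert (Eb : s - INR k * M = b + M) by (unfold b; rewrite S_INR; ring). rewrite Eb in I1.
    replace (u x + s - INR (S k) * M) with (u x + b) by (unfold b; ring).
    change (fact (S k)) with (S k * fact k)%nat. rewrite mult_INR.
    assert (0 <= INR (S k)) by apply pos_INR.
    replace (INR (S k) * INR (fact k) * (u x * ee k l u + ee (S k) l u)) with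
      (INR (S k) * u x * (INR (fact k) * ee k l u) + INR (S k) * INR (fact k) * ee (S k) l u) by ring.
    rewrite <- mult_INR. change (S k * fact k)%nat with (fact (S k)).
    assert (G1 : INR (S k) * u x * Rmax 0 (b + M) ^ k <= INR (S k) * u x * (INR (fact k) * ee k l u)).
    { apply Rmult_le_compat_l; auto. apply Rmult_le_pos; lra. }
    assert (P0 : 0 <= Rmax 0 (b+M) ^ k) by (apply pow_le, Rmax_l).
    assert (P1 : 0 <= Rmax 0 b ^ S k) by (apply pow_le, Rmax_l).
    apply Rle_trans with (INR (S k) * u x * Rmax 0 (b + M) ^ k + Rmax 0 b ^ S k); [|lra].
    destruct (Rle_dec 0 b) as [Hb|Hb].
    + rewrite (Rmax_right 0 b), (Rmax_right 0 (u x + b)), (Rmax_right 0 (b + M)) by lra.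
      eapply Rle_trans; [apply bern_lo; lra|].
      assert ((u x + b) ^ k <= (b + M) ^ k) by (apply pow_incr; lra).
      assert (INR (S k) * u x * (u x + b) ^ k <= INR (S k) * u x * (b + M) ^ k).
      { apply Rmult_le_compat_l; auto. apply Rmult_le_pos; lra. } lra.
    + rewrite (Rmax_left 0 b) by lra. rewrite pow_i by lia. rewrite Rplus_0_r.
      destruct (Rle_dec (u x + b) 0) as [Hc|Hc].
      * rewrite (Rmax_left 0 (u x + b)) by lra. rewrite pow_i by lia.
        apply Rmult_le_pos; [apply Rmult_le_pos|]; lra.
      * rewrite (Rmax_right 0 (u x + b)) by lra.
        assert ((u x + b) ^ k <= Rmax 0 (b + M) ^ k) by (apply pow_incr; split; [lra|]; eapply Rle_trans; [|apply Rmax_r]; lra).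
        change ((u x + b) ^ S k) with ((u x + b) * (u x + b) ^ k).
        assert (0 <= (u x + b) ^ k) by (apply pow_le; lra).
        assert (1 <= INR (S k)) by (rewrite S_INR; assert (0 <= INR k) by apply pos_INR; lra).
        apply Rle_trans with (u x * Rmax 0 (b + M) ^ k).
        apply Rmult_le_compat; lra.
        rewrite Rmult_assoc. rewrite <- (Rmult_1_l (u x * _)) at 1. apply Rmult_le_compat_r; [apply Rmult_le_pos|]; lra.
Qed.

Open Scope bool_scope.

Definition notin (I : list nat) := fun j => negb (existsb (Nat.eqb j) I).

Lemma existsb_in j I : existsb (Nat.eqb j) I = true <-> In j I.
Proof. rewrite existsb_exists. split. intros [x [Hx E]]. apply Nat.eqb_eq in E; subst; auto.
  intros H; exists j; split; auto; apply Nat.eqb_refl. Qed.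

Lemma notin_false j I : notin I j = false <-> In j I.
Proof. unfold notin. rewrite <- existsb_in. destruct (existsb _ _); simpl; split; auto; discriminate. Qed.
Lemma notin_true j I : notin I j = true <-> ~ In j I.
Proof. unfold notin. rewrite <- existsb_in. destruct (existsb _ _); simpl; split; auto; try discriminate.
  all: intros H; exfalso; auto. Qed.

Lemma in_choose_S k x l I : In I (choose (S k) (x :: l)) ->
  (exists I', I = x :: I' /\ In I' (choose k l)) \/ In I (choose (S k) l).
Proof. simpl. intros H. apply in_app_or in H. destruct H as [H|H]; [left|right; auto].
  apply in_map_iff in H. destruct H as [I' [<- H]]. eauto. Qed.

Lemma choose_0 l : choose 0 l = [[]]. Proof. destruct l; reflexivity. Qed.

Lemma choose_incl l : forall k I, In I (choose k l) -> forall x, In x I -> In x l.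
Proof. induction l as [|y l IH]; intros k I HI x Hx.
  - destruct k; simpl in HI; [destruct HI as [<-|[]]; inversion Hx| inversion HI].
  - destruct k. rewrite choose_0 in HI. destruct HI as [<-|[]]; inversion Hx.
    apply in_choose_S in HI. destruct HI as [[I' [-> HI']]|HI].
    + destruct Hx as [<-|Hx]; [now left| right; eapply IH; eauto].
    + right; eapply IH; eauto. Qed.

Lemma choose_length l : forall k I, In I (choose k l) -> length I = k.
Proof. induction l as [|y l IH]; intros k I HI.
  - destruct k; simpl in HI; [destruct HI as [<-|[]]; auto| inversion HI].
  - destruct k. rewrite choose_0 in HI. destruct HI as [<-|[]]; auto.
    apply in_choose_S in HI. destruct HI as [[I' [-> HI']]|HI].
    + simpl; f_equal; eauto.
    + eauto. Qed.

Lemma choose_nodup l : NoDup l -> forall k I, In I (choose k l) -> NoDup I.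
Proof. induction l as [|y l IH]; intros Hl k I HI.
  - destruct k; simpl in HI; [destruct HI as [<-|[]]; constructor| inversion HI].
  - inversion Hl; subst. destruct k. rewrite choose_0 in HI. destruct HI as [<-|[]]; constructor.
    apply in_choose_S in HI. destruct HI as [[I' [-> HI']]|HI].
    + constructor; eauto. intros Hy. apply H1. eapply choose_incl; eauto.
    + eauto. Qed.

Lemma filter_notin_cons_head x l I : ~ In x l ->
  filter (notin (x :: I)) l = filter (notin I) l.
Proof. intros Hx. apply filter_ext_in. intros a Ha. unfold notin. simpl.
  destruct (Nat.eqb_spec a x); [subst; contradiction|reflexivity]. Qed.

Lemma filter_notin_nil l : filter (notin []) l = l.
Proof. induction l as [|a l IH]; [reflexivity|]. change (filter (notin []) (a::l)) with (a :: filter (notin []) l). now rewrite IH. Qed.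

Lemma choose_compl_prod l : NoDup l -> forall k I g, In I (choose k l) ->
  prodR (filter (notin I) l) g * prodR I g = prodR l g.
Proof. induction l as [|y l IH]; intros Hl k I g HI.
  - destruct k; simpl in HI; [destruct HI as [<-|[]]; simpl; rewrite prodR_nil; ring| inversion HI].
  - inversion Hl; subst. destruct k.
    + rewrite choose_0 in HI. destruct HI as [<-|[]]. rewrite prodR_nil, Rmult_1_r.
      now rewrite filter_notin_nil.
    + apply in_choose_S in HI. destruct HI as [[I' [-> HI']]|HI].
      * simpl filter. replace (notin (y :: I') y) with false by (symmetry; apply notin_false; now left).
        rewrite filter_notin_cons_head by auto. rewrite !prodR_cons.
        rewrite <- (IH H2 k I' g HI'). ring.
      * simpl filter. replace (notin I y) with true.
        rewrite !prodR_cons. rewrite <- (IH H2 (S k) I g HI). ring.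
        symmetry; apply notin_true. intros Hy. apply H1. eapply choose_incl; eauto.
Qed.

Lemma choose_compl_count l : NoDup l -> forall k I (Rp : nat -> bool), In I (choose k l) ->
  (length (filter (fun j => Rp j && notin I j) l) + length (filter Rp I) = length (filter Rp l))%nat.
Proof. induction l as [|y l IH]; intros Hl k I Rp HI.
  - destruct k; simpl in HI; [destruct HI as [<-|[]]; reflexivity| inversion HI].
  - inversion Hl; subst. destruct k.
    + rewrite choose_0 in HI. destruct HI as [<-|[]]. simpl filter at 2. rewrite Nat.add_0_r.
      f_equal. apply filter_ext; intros a. unfold notin; simpl. now rewrite Bool.andb_true_r.
    + apply in_choose_S in HI. destruct HI as [[I' [-> HI']]|HI].
      * simpl filter. replace (notin (y :: I') y) with false by (symmetry; apply notin_false; now left).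
        rewrite Bool.andb_false_r.
        rewrite (filter_ext_in (fun j => Rp j && notin (y :: I') j) (fun j => Rp j && notin I' j)).
        2:{ intros a Ha. f_equal. unfold notin; simpl. destruct (Nat.eqb_spec a y); [subst; contradiction|reflexivity]. }
        specialize (IH H2 k I' Rp HI'). destruct (Rp y); simpl; lia.
      * simpl filter. replace (notin I y) with true.
        2:{ symmetry; apply notin_true. intros Hy. apply H1. eapply choose_incl; eauto. }
        rewrite Bool.andb_true_r. specialize (IH H2 (S k) I Rp HI). destruct (Rp y); simpl; lia.
Qed.

Lemma nodup_seq a len : NoDup (seq a len).
Proof. apply seq_NoDup. Qed.

Open Scope bool_scope.

Lemma nth_filter_seq (P : nat -> bool) len : forall a p, (p < length (filter P (seq a len)))%nat ->
  let D := nth p (filter P (seq a len)) O in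
  (a <= D < a + len)%nat /\ P D = true /\ length (filter P (seq a (D - a))) = p.
Proof. induction len as [|len IH]; intros a p Hp; simpl in *.
  - lia.
  - destruct (P a) eqn:Pa.
    + destruct p as [|p].
      * simpl. rewrite Nat.sub_diag. simpl. repeat split; auto; lia.
      * simpl in Hp. simpl. destruct (IH (S a) p ltac:(lia)) as [H1 [H2 H3]].
        set (D := nth p (filter P (seq (S a) len)) O) in *.
        repeat split; auto; try lia. replace (D - a)%nat with (S (D - S a)) by lia. simpl. rewrite Pa.
        simpl. now rewrite H3.
    + destruct (IH (S a) p Hp) as [H1 [H2 H3]].
      set (D := nth p (filter P (seq (S a) len)) O) in *.
      repeat split; auto; try lia. replace (D - a)%nat with (S (D - S a)) by lia. simpl. rewrite Pa.
      auto.
Qed.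

Lemma count_strict (P : nat -> bool) a D1 D2 : (a <= D1 < D2)%nat -> P D1 = true ->
  (length (filter P (seq a (D1 - a))) < length (filter P (seq a (D2 - a))))%nat.
Proof. intros H HP. replace (D2 - a)%nat with ((D1 - a) + (D2 - D1))%nat by lia.
  rewrite seq_app, filter_app, length_app. replace (a + (D1 - a))%nat with D1 by lia.
  replace (D2 - D1)%nat with (S (D2 - D1 - 1)) by lia. simpl. rewrite HP. simpl. lia. Qed.

Lemma count_unique (P : nat -> bool) a D1 D2 : (a <= D1)%nat -> (a <= D2)%nat -> P D1 = true -> P D2 = true ->
  length (filter P (seq a (D1 - a))) = length (filter P (seq a (D2 - a))) -> D1 = D2.
Proof. intros H1 H2 P1 P2 E. destruct (Nat.lt_total D1 D2) as [L|[L|L]]; auto.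
  - assert (X := count_strict P a D1 D2 ltac:(lia) P1). lia.
  - assert (X := count_strict P a D2 D1 ltac:(lia) P2). lia. Qed.

Lemma filter_lt_seq (P : nat -> bool) r E : (1 <= E <= S r)%nat ->
  filter (fun j => (j <? E)%nat && P j) (seq 1 r) = filter P (seq 1 (E - 1)).
Proof. intros HE. replace r with ((E - 1) + (S r - E))%nat at 1 by lia.
  rewrite seq_app, filter_app.
  rewrite (filter_ext_in _ P (seq 1 (E-1))).
  2:{ intros j Hj. apply in_seq in Hj. replace (j <? E)%nat with true; auto. symmetry; apply Nat.ltb_lt; lia. }
  rewrite (filter_ext_in _ (fun _ => false) (seq (1 + (E-1)) (S r - E))).
  2:{ intros j Hj. apply in_seq in Hj. replace (j <? E)%nat with false; auto. symmetry; apply Nat.ltb_ge; lia. }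
  rewrite filter_false, app_nil_r. auto. Qed.

Lemma count_rel r k I E : In I (choose k (seq 1 r)) -> (1 <= E <= S r)%nat ->
  (length (filter (notin I) (seq 1 (E - 1))) + length (filter (fun i => i <? E)%nat I) = E - 1)%nat.
Proof. intros HI HE. assert (X := choose_compl_count (seq 1 r) (seq_NoDup _ _) k I (fun i => i <? E)%nat HI).
  cbv beta in X. rewrite filter_lt_seq in X by auto.
  assert (Y := filter_lt_seq (fun _ => true) r E HE). rewrite filter_true in Y.
  rewrite (filter_ext (fun j => (j <? E)%nat && true) (fun j => (j <? E)%nat)) in Y by (intros; apply Bool.andb_true_r).
  rewrite Y in X. rewrite length_seq in X. auto. Qed.

Lemma compl_length r k I : In I (choose k (seq 1 r)) -> length (filter (notin I) (seq 1 r)) = (r - k)%nat.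
Proof. intros HI. assert (X := choose_compl_count (seq 1 r) (seq_NoDup _ _) k I (fun _ => true) HI).
  cbv beta in X. rewrite !filter_true, length_seq in X. change (fun j => true && notin I j) with (notin I) in X. rewrite (choose_length _ _ _ HI) in X. lia. Qed.
Lemma prodR_map {A B} (l:list A) (h:A->B) g : prodR (map h l) g = prodR l (fun a => g (h a)).
Proof. unfold prodR. rewrite map_map; reflexivity. Qed.

Lemma prodR_nth (d : list nat) f : prodR d f = prodR (seq 0 (length d)) (fun l => f (nth l d O)).
Proof. induction d as [|x d IH]. reflexivity. simpl length. simpl seq. rewrite !prodR_cons, IH.
  rewrite <- seq_shift, prodR_map. reflexivity. Qed.

Lemma sumR_nth {A} (d : list A) (z : A) f : sumR d f = sumR (seq 0 (length d)) (fun l => f (nth l d z)).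
Proof. induction d as [|x d IH]. reflexivity. simpl length. simpl seq. rewrite !sumR_cons, IH.
  rewrite <- seq_shift, sumR_map. reflexivity. Qed.

Lemma prod_idx (d : list nat) p h : NoDup d -> (p < length d)%nat ->
  prodR (seq 0 (length d)) (fun l => if (l =? p)%nat then 1 else h (nth l d O)) =
  prodR d (fun j => if (j =? nth p d O)%nat then 1 else h j).
Proof. intros Hd Hp. rewrite (prodR_nth d). apply prodR_ext. intros l Hl. apply in_seq in Hl.
  destruct (Nat.eqb_spec l p); destruct (Nat.eqb_spec (nth l d O) (nth p d O)); auto.
  - subst; contradiction.
  - exfalso. apply n. eapply NoDup_nth; eauto. lia. Qed.

Lemma prod_down a k : prodR (seq a k) (fun j => INR (a + k) - INR j) = INR (fact k).
Proof. revert a; induction k as [|k IH]; intros a. reflexivity.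
  simpl seq. rewrite prodR_cons. replace (a + S k)%nat with (S a + k)%nat by lia. rewrite IH.
  replace (INR (S a + k) - INR a) with (INR (S k)). change (fact (S k)) with (S k * fact k)%nat. rewrite mult_INR. auto.
  replace (S a + k)%nat with (a + S k)%nat by lia. rewrite plus_INR. ring. Qed.

Lemma prod_up D k : prodR (seq (S D) k) (fun j => INR j - INR D) = INR (fact k).
Proof. induction k as [|k IH]. reflexivity.
  rewrite seq_S, prodR_app, IH, prodR_cons, prodR_nil. change (fact (S k)) with (S k * fact k)%nat.
  replace (INR (S D + k) - INR D) with (INR (S k)). rewrite mult_INR. ring.
  replace (S D + k)%nat with (D + S k)%nat by lia. rewrite plus_INR. ring. Qed.

Lemma sum_down a k : sumR (seq a k) (fun j => INR (a + k) - INR j) = INR k * (INR k + 1) / 2.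
Proof. revert a; induction k as [|k IH]; intros a. simpl; unfold sumR; simpl; field.
  simpl seq. rewrite sumR_cons. replace (a + S k)%nat with (S a + k)%nat by lia. rewrite IH.
  replace (S a + k)%nat with (a + S k)%nat by lia. rewrite plus_INR, !S_INR. field. Qed.

Lemma sum_up D k : sumR (seq (S D) k) (fun j => INR j - INR D) = INR k * (INR k + 1) / 2.
Proof. induction k as [|k IH]. simpl; unfold sumR; simpl; field.
  rewrite seq_S, sumR_app, IH, sumR_cons, sumR_nil.
  replace (S D + k)%nat with (D + S k)%nat by lia. rewrite plus_INR, !S_INR. field. Qed.

Lemma prodR_pos {A} (l : list A) f : (forall x, In x l -> 0 < f x) -> 0 < prodR l f.
Proof. induction l as [|a l IH]; intros H; [rewrite prodR_nil; lra|]. rewrite prodR_cons.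
  apply Rmult_lt_0_compat; [apply H; now left|apply IH; intros; apply H; now right]. Qed.

Open Scope bool_scope.

Definition condI (D a : nat) (I : list nat) : bool :=
  notin I D && (length (filter (fun i => (i <? D)%nat) I) =? a)%nat.
Definition uD (D : nat) (i : nat) : R := Rabs (INR i - INR D).
Definition F0 (r n D : nat) : R := INR (fact (r - n)) / (INR (fact (D - 1)) * INR (fact (r - D))).

Lemma seq_split r D : (1 <= D <= r)%nat -> seq 1 r = seq 1 (D - 1) ++ D :: seq (S D) (r - D).
Proof. intros H. replace r with ((D - 1) + S (r - D))%nat at 1 by lia. rewrite seq_app.
  replace (1 + (D - 1))%nat with D by lia. reflexivity. Qed.

Lemma prod_g_seq r D : (1 <= D <= r)%nat ->
  prodR (seq 1 r) (fun j => if (j =? D)%nat then 1 else / uD D j) = / (INR (fact (D - 1)) * INR (fact (r - D))).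
Proof. intros HD. rewrite (seq_split r D HD), prodR_app, prodR_cons, Nat.eqb_refl, Rmult_1_l.
  rewrite (prodR_ext (seq 1 (D - 1)) _ (fun j => / (INR (1 + (D - 1)) - INR j))).
  2:{ intros j Hj. apply in_seq in Hj. replace (j =? D)%nat with false by (symmetry; apply Nat.eqb_neq; lia).
      unfold uD. rewrite Rabs_minus_sym, Rabs_right. f_equal. f_equal. f_equal. lia.
      assert (INR j < INR D) by (apply lt_INR; lia). lra. }
  rewrite (prodR_ext (seq (S D) (r - D)) _ (fun j => / (INR j - INR D))).
  2:{ intros j Hj. apply in_seq in Hj. replace (j =? D)%nat with false by (symmetry; apply Nat.eqb_neq; lia).
      unfold uD. rewrite Rabs_right. auto.
      assert (INR D < INR j) by (apply lt_INR; lia). lra. }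
  rewrite !prodR_inv, prod_down, prod_up. rewrite Rinv_mult. auto. Qed.

Lemma pure_char r n p q I : (1 <= q <= n)%nat -> (n <= r)%nat -> (p <= r - n)%nat ->
  In I (choose (n - 1) (seq 1 r)) ->
  pure_entry r n p q I = if condI (p + q) (q - 1) I then F0 r n (p + q) * prodR I (uD (p + q)) else 0.
Proof. intros Hq Hr Hp HI. unfold pure_entry.
  change (compl_r r I) with (filter (notin I) (seq 1 r)).
  set (d := filter (notin I) (seq 1 r)).
  assert (Hlen : length d = (r - n + 1)%nat) by (unfold d; rewrite (compl_length r (n-1) I HI); lia).
  assert (Hpd : (p < length d)%nat) by lia.
  destruct (nth_filter_seq (notin I) r 1 p Hpd) as [H1 [H2 H3]]. fold d in H1, H2, H3.
  remember (nth p d O) as D0 eqn:HD0. set (D := (p + q)%nat).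
  destruct (Nat.eqb_spec D0 D) as [E|E].
  - assert (Cd : condI D (q - 1) I = true).
    { unfold condI. rewrite <- E, H2. simpl. apply Nat.eqb_eq.
      assert (X := count_rel r (n - 1) I D0 HI ltac:(lia)). rewrite H3 in X. unfold D in E. lia. }
    rewrite Cd. replace (q =? D0 - p)%nat with true by (symmetry; apply Nat.eqb_eq; unfold D in E; lia).
    rewrite E in *.
    rewrite <- Hlen.
    change (fold_right Rmult 1 (map (fun l => if (l =? p)%nat then 1 else / Rabs (INR (nth l d O) - INR D)) (seq 0 (length d))))
      with (prodR (seq 0 (length d)) (fun l => if (l =? p)%nat then 1 else (fun j => / Rabs (INR j - INR D)) (nth l d O))).
    assert (Hnd : NoDup d) by (apply NoDup_filter, seq_NoDup).
    rewrite prod_idx by auto. rewrite <- HD0.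
    assert (HDI : ~ In D I). { apply notin_true. auto. }
    assert (X := choose_compl_prod (seq 1 r) (seq_NoDup _ _) (n-1) I (fun j => if (j =? D)%nat then 1 else / uD D j) HI).
    fold d in X.
    rewrite (prodR_ext I (fun j => if (j =? D)%nat then 1 else / uD D j) (fun j => / uD D j)) in X.
    2:{ intros j Hj. replace (j =? D)%nat with false; auto. symmetry; apply Nat.eqb_neq; intros Z; rewrite Z in Hj; contradiction. }
    rewrite prodR_inv in X. rewrite prod_g_seq in X by lia.
    assert (Hpos : 0 < prodR I (uD D)).
    { apply prodR_pos. intros j Hj. unfold uD. apply Rabs_pos_lt. intros Z. apply HDI.
      assert (INR j = INR D) by lra. apply INR_eq in H. rewrite H in Hj; auto. }
    change (fun j => if (j =? D)%nat then 1 else / Rabs (INR j - INR D)) with (fun j => if (j =? D)%nat then 1 else / uD D j).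
    assert (Y : prodR d (fun j => if (j =? D)%nat then 1 else / uD D j) = / (INR (fact (D - 1)) * INR (fact (r - D))) * prodR I (uD D)).
    { rewrite <- X. field. lra. }
    rewrite Y. unfold F0. unfold Rdiv. ring.
  - assert (Cd : condI D (q - 1) I = false).
    { destruct (condI D (q - 1) I) eqn:C; auto. exfalso. unfold condI in C.
      apply andb_prop in C. destruct C as [C1 C2]. apply Nat.eqb_eq in C2.
      assert (X := count_rel r (n - 1) I D HI ltac:(unfold D; lia)).
      apply E. apply (count_unique (notin I) 1 D0 D); try lia; auto. }
    rewrite Cd. replace (q =? D0 - p)%nat with false; auto. symmetry; apply Nat.eqb_neq. unfold D in E. lia.
Qed.

Open Scope bool_scope.

Lemma sumR_zero {A} (l : list A) : sumR l (fun _ => 0) = 0.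
Proof. rewrite sumR_const; ring. Qed.

Lemma filter_all_false {A} (P : A -> bool) l : (forall x, In x l -> P x = false) -> filter P l = [].
Proof. induction l as [|a l IH]; intros H; simpl; auto. rewrite H by (now left). apply IH; intros; apply H; now right. Qed.

Lemma T_lemma D u l2 : (forall x, In x l2 -> (D < x)%nat) -> forall l1, (forall x, In x l1 -> (x < D)%nat) ->
  forall k a, sumR (choose k (l1 ++ D :: l2)) (fun I => if condI D a I then prodR I u else 0) =
    if (a <=? k)%nat then ee a l1 u * ee (k - a) l2 u else 0.
Proof. intros H2. induction l1 as [|x l1 IH]; intros H1 k a.
  - destruct k as [|k].
    + rewrite choose_0, sumR_cons, sumR_nil. unfold condI. simpl. destruct a; simpl.
      rewrite !ee_0, prodR_nil; ring. ring.
    + simpl app. simpl choose. rewrite sumR_app, sumR_map.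
      rewrite (sumR_ext _ _ (fun _ => 0)). 2:{ intros I _. unfold condI, notin. simpl. rewrite Nat.eqb_refl. reflexivity. }
      rewrite sumR_zero, Rplus_0_l.
      rewrite (sumR_ext _ _ (fun I => if (0 =? a)%nat then prodR I u else 0)).
      2:{ intros I HI. unfold condI.
          replace (notin I D) with true. replace (filter (fun i => (i <? D)%nat) I) with (@nil nat). auto.
          symmetry. apply filter_all_false. intros y Hy. apply Nat.ltb_ge. 
          assert (Hy' := choose_incl _ _ _ HI y Hy). apply H2 in Hy'. lia.
          symmetry. apply notin_true. intros Hy. assert (Hy' := choose_incl _ _ _ HI D Hy). apply H2 in Hy'. lia. }
      destruct a as [|a].
      * simpl. rewrite ee_0. unfold ee. ring.
      * simpl. rewrite sumR_zero. destruct (a <=? k)%nat; [rewrite ee_S_nil|]; ring.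
  - assert (Hx : (x < D)%nat) by (apply H1; now left).
    assert (H1' : forall y, In y l1 -> (y < D)%nat) by (intros; apply H1; now right).
    destruct k as [|k].
    + rewrite choose_0, sumR_cons, sumR_nil. unfold condI. simpl. destruct a; simpl.
      rewrite !ee_0, prodR_nil; ring. ring.
    + simpl app. simpl choose. rewrite sumR_app, sumR_map.
      assert (Ex : forall I, condI D a (x :: I) = notin I D && (S (length (filter (fun i => (i <? D)%nat) I)) =? a)%nat).
      { intros I. unfold condI, notin. simpl. replace (D =? x)%nat with false by (symmetry; apply Nat.eqb_neq; lia).
        replace (x <? D)%nat with true by (symmetry; apply Nat.ltb_lt; lia). reflexivity. }
      rewrite (IH H1' (S k) a). destruct a as [|a].
      * rewrite (sumR_ext _ _ (fun _ => 0)). 2:{ intros I _. rewrite Ex. rewrite Bool.andb_false_r. reflexivity. }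
        rewrite sumR_zero. simpl. rewrite !ee_0. ring.
      * rewrite (sumR_ext _ _ (fun I => u x * (if condI D a I then prodR I u else 0))).
        2:{ intros I _. rewrite Ex. unfold condI. simpl (S _ =? S a)%nat. destruct (_ && _); rewrite ?prodR_cons; ring. }
        rewrite sumR_scal, IH by auto. rewrite ee_S_cons. simpl.
        destruct (a <=? k)%nat; ring.
Qed.

Lemma sum_pure r n p q : (1 <= q <= n)%nat -> (n <= r)%nat -> (p <= r - n)%nat ->
  sumR (choose (n - 1) (seq 1 r)) (pure_entry r n p q) =
  F0 r n (p + q) * ee (q - 1) (seq 1 (p + q - 1)) (uD (p + q)) * ee (n - q) (seq (S (p + q)) (r - (p + q))) (uD (p + q)).
Proof. intros Hq Hr Hp.
  rewrite (sumR_ext _ _ (fun I => F0 r n (p + q) * (if condI (p + q) (q - 1) I then prodR I (uD (p + q)) else 0))).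
  2:{ intros I HI. rewrite pure_char by auto. destruct (condI _ _ _); ring. }
  rewrite sumR_scal. rewrite (seq_split r (p + q)) at 1 by lia.
  rewrite T_lemma. replace (q - 1 <=? n - 1)%nat with true by (symmetry; apply Nat.leb_le; lia).
  replace (n - 1 - (q - 1))%nat with (n - q)%nat by lia. ring.
  intros x Hx; apply in_seq in Hx; lia.
  intros x Hx; apply in_seq in Hx; lia.
Qed.

Lemma pure_bound r n p q I : (1 <= q <= n)%nat -> (n <= r)%nat -> (p <= r - n)%nat ->
  In I (choose (n - 1) (seq 1 r)) ->
  0 <= pure_entry r n p q I <= F0 r n (p + q) * INR r ^ (n - 1).
Proof. intros Hq Hr Hp HI. rewrite pure_char by auto.
  assert (HF : 0 <= F0 r n (p + q)).
  { unfold F0. apply Rmult_le_pos. apply pos_INR. left; apply Rinv_0_lt_compat, Rmult_lt_0_compat; apply lt_0_INR, lt_O_fact. }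
  assert (Hu : forall i, In i I -> 0 <= uD (p + q) i <= INR r).
  { intros i Hi. assert (Hi' := choose_incl _ _ _ HI i Hi). apply in_seq in Hi'. unfold uD. split; [apply Rabs_pos|].
    assert (INR 1 <= INR i <= INR r) by (split; apply le_INR; lia).
    assert (INR 1 <= INR (p + q) <= INR r) by (split; apply le_INR; lia). simpl in *. apply Rabs_le; lra. }
  assert (0 <= INR r ^ (n - 1)) by (apply pow_le, pos_INR).
  destruct (condI _ _ _).
  - split. apply Rmult_le_pos; auto. apply prodR_nonneg; intros; apply Hu; auto.
    apply Rmult_le_compat_l; auto. rewrite <- (choose_length _ _ _ HI). apply prodR_le_pow; auto.
  - split; [lra|]. apply Rmult_le_pos; auto.
Qed.

Lemma pow_div_distr a b k : b <> 0 -> (a / b) ^ k = a ^ k / b ^ k.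
Proof. intros Hb. unfold Rdiv. rewrite Rpow_mult_distr, pow_inv. auto. Qed.

Lemma bern_minus y m : 0 <= y <= 1 -> 1 - INR m * y <= (1 - y) ^ m.
Proof. intros Hy. induction m as [|m IH]. simpl; lra.
  rewrite S_INR. simpl pow. assert (0 <= INR m) by apply pos_INR.
  assert (X := Rmult_le_compat_l (1 - y) _ _ ltac:(lra) IH). nra. Qed.

Lemma pow_up_bound y m : 0 <= y -> INR m * y <= / 2 -> (1 + y) ^ m <= 1 + 2 * INR m * y.
Proof. intros Hy Hm. destruct m as [|m]. simpl; lra.
  assert (H1 : 1 <= INR (S m)) by (rewrite S_INR; assert (0 <= INR m) by apply pos_INR; lra).
  assert (Hy1 : y <= / 2) by nra. set (t := INR (S m) * y) in *.
  assert (A := bern_minus y (S m) ltac:(lra)). fold t in A.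
  assert (B : (1 + y) ^ S m * (1 - y) ^ S m <= 1).
  { rewrite <- Rpow_mult_distr. apply Rle_trans with (1 ^ S m). apply pow_incr; split; nra. rewrite pow1; lra. }
  assert (P : 0 <= (1 + y) ^ S m) by (apply pow_le; lra).
  assert (C : (1 + y) ^ S m * (1 - t) <= 1).
  { eapply Rle_trans; [|exact B]. apply Rmult_le_compat_l; auto. }
  assert (0 <= t) by (unfold t; nra). replace (2 * INR (S m) * y) with (2 * t) by (unfold t; ring). clearbody t. nra. Qed.

Lemma fact_bounds x k : INR (fact x) * INR x ^ k <= INR (fact (x + k)) <= INR (fact x) * INR (x + k) ^ k.
Proof. induction k as [|k IH]. rewrite Nat.add_0_r; simpl; lra.
  replace (x + S k)%nat with (S (x + k)) by lia. change (fact (S (x + k))) with (S (x + k) * fact (x + k))%nat.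
  rewrite mult_INR. destruct IH as [IH1 IH2]. change (INR x ^ S k) with (INR x * INR x ^ k). change (INR (S (x+k)) ^ S k) with (INR (S (x+k)) * INR (S (x+k)) ^ k).
  assert (0 <= INR (fact x)) by apply pos_INR. assert (0 <= INR x ^ k) by (apply pow_le, pos_INR).
  assert (INR x <= INR (S (x + k))) by (apply le_INR; lia).
  assert (0 <= INR x) by apply pos_INR.
  assert (INR (x + k) <= INR (S (x + k))) by (apply le_INR; lia).
  assert (0 <= INR (x + k) ^ k) by (apply pow_le, pos_INR).
  assert (INR (x + k) ^ k <= INR (S (x + k)) ^ k) by (apply pow_incr; split; [apply pos_INR|auto]).
  split.
  - apply Rle_trans with (INR (S (x + k)) * (INR (fact x) * INR x ^ k)).
    + replace (INR (fact x) * (INR x * INR x ^ k)) with (INR x * (INR (fact x) * INR x ^ k)) by ring.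
      apply Rmult_le_compat_r; [apply Rmult_le_pos|]; auto.
    + apply Rmult_le_compat_l; auto. apply pos_INR.
  - apply Rle_trans with (INR (S (x + k)) * (INR (fact x) * INR (x + k) ^ k)).
    + apply Rmult_le_compat_l; auto. apply pos_INR.
    + replace (INR (fact x) * (INR (S (x + k)) * INR (S (x + k)) ^ k)) with
        (INR (S (x + k)) * (INR (fact x) * INR (S (x + k)) ^ k)) by ring.
      apply Rmult_le_compat_l; [apply pos_INR|]. apply Rmult_le_compat_l; auto.
Qed.

Definition Gq (x k : nat) (e : R) : R :=
  INR (fact x) * 2 ^ k * (INR (fact k) * e) / (INR (fact (x + k)) * INR x ^ k).

Lemma G_bounds x k e d :
  (k <= x)%nat -> 0 < d <= 1 -> 8 * (INR k + 1) ^ 2 / d <= INR x ->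
  let N := INR (x + k) in let s := N * (N + 1) / 2 in
  Rmax 0 (s - INR k * N) ^ k <= INR (fact k) * e <= s ^ k ->
  1 - d <= Gq x k e <= 1 + d.
Proof. intros Hkx Hd Hx N s [He1 He2].
  assert (Hk0 : 0 <= INR k) by apply pos_INR.
  assert (Hxp : 8 * (INR k + 1)^2 <= INR x * d).
  { apply (Rmult_le_compat_r d) in Hx; [|lra]. unfold Rdiv in Hx. rewrite Rmult_assoc, Rinv_l, Rmult_1_r in Hx by lra. lra. }
  assert (X1 : 1 <= INR x) by nra.
  assert (HN : N = INR x + INR k) by (unfold N; apply plus_INR).
  assert (Hkx' : INR k <= INR x) by (apply le_INR; auto).
  destruct (fact_bounds x k) as [F1 F2]. fold N in F2.
  set (P := INR (fact x)) in *. set (F := INR (fact (x + k))) in *.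
  assert (HP : 0 < P) by (apply lt_0_INR, lt_O_fact).
  assert (HXk : 0 < INR x ^ k) by (apply pow_lt; lra).
  assert (HF : 0 < F) by (apply lt_0_INR, lt_O_fact).
  assert (H2k : 0 < 2 ^ k) by (apply pow_lt; lra).
  assert (Hke : 0 <= INR (fact k) * e) by (eapply Rle_trans; [apply pow_le, Rmax_l | exact He1]).
  unfold Gq. fold P F. split.
  -
    assert (Hs : s - INR k * N = N * (INR x + 1 - INR k) / 2) by (unfold s; rewrite HN; field).
    rewrite Hs in He1. rewrite Rmax_right in He1 by (rewrite HN; apply Rmult_le_pos; nra).
    assert (HNp : 0 < N) by lra.
    assert (L1 : (N * (INR x + 1 - INR k) / 2) ^ k * (P * 2 ^ k) <= (INR (fact k) * e) * (P * 2^k)).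
    { apply Rmult_le_compat_r; [nra|auto]. }
    rewrite pow_div_distr, Rpow_mult_distr in L1 by lra.
    replace (N ^ k * (INR x + 1 - INR k) ^ k / 2 ^ k * (P * 2 ^ k)) with (P * N ^ k * (INR x + 1 - INR k) ^ k) in L1 by (field; lra).
    assert (L2 : P * 2 ^ k * (INR (fact k) * e) / (F * INR x ^ k) >= P * N ^ k * (INR x + 1 - INR k) ^ k / (P * N^k * INR x ^ k)).
    { apply Rle_ge. unfold Rdiv. apply Rle_trans with (P * N ^ k * (INR x + 1 - INR k) ^ k * / (F * INR x ^ k)).
      apply Rmult_le_compat_l. apply Rmult_le_pos. apply Rmult_le_pos; [lra| apply pow_le; lra]. apply pow_le; lra.
      apply Rinv_le_contravar. apply Rmult_lt_0_compat; auto. apply Rmult_le_compat_r; lra.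
      apply Rmult_le_compat_r. left; apply Rinv_0_lt_compat, Rmult_lt_0_compat; auto. lra. }
    replace (P * N ^ k * (INR x + 1 - INR k) ^ k / (P * N ^ k * INR x ^ k)) with (((INR x + 1 - INR k) / INR x) ^ k) in L2.
    2:{ rewrite pow_div_distr by lra. field; repeat split; first [lra | apply pow_nonzero; lra]. }
    assert (L3 : (1 - INR k / INR x) ^ k <= ((INR x + 1 - INR k) / INR x) ^ k).
    { assert (Q : INR k / INR x <= 1). { apply (Rmult_le_reg_r (INR x)); [lra|]. unfold Rdiv. rewrite Rmult_assoc, Rinv_l by lra. lra. }
      apply pow_incr. split; [lra|]. replace ((INR x + 1 - INR k) / INR x) with (1 - INR k / INR x + / INR x) by (field; lra).
      assert (0 < / INR x) by (apply Rinv_0_lt_compat; lra). lra. }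
    assert (L4 := bern_minus (INR k / INR x) k).
    assert (L5 : 0 <= INR k / INR x <= 1). { split. unfold Rdiv; apply Rmult_le_pos; [lra|left; apply Rinv_0_lt_compat; lra].
      apply (Rmult_le_reg_r (INR x)); [lra|]. unfold Rdiv. rewrite Rmult_assoc, Rinv_l by lra. lra. }
    specialize (L4 L5).
    assert (L6 : INR k * (INR k / INR x) <= d).
    { apply (Rmult_le_reg_r (INR x)); [lra|]. unfold Rdiv. replace (INR k * (INR k * / INR x) * INR x) with (INR k * INR k) by (field; lra). nra. }
    lra.
  -
    assert (U1 : P * 2 ^ k * (INR (fact k) * e) / (F * INR x ^ k) <= P * 2 ^ k * s ^ k / (P * INR x ^ k * INR x ^ k)).
    { unfold Rdiv. apply Rle_trans with (P * 2 ^ k * (INR (fact k) * e) * / (P * INR x ^ k * INR x ^ k)).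
      apply Rmult_le_compat_l. apply Rmult_le_pos; [apply Rmult_le_pos|]; [lra|lra|auto].
      apply Rinv_le_contravar. apply Rmult_lt_0_compat; [apply Rmult_lt_0_compat|]; auto.
      apply Rmult_le_compat_r; lra.
      apply Rmult_le_compat_r. left; apply Rinv_0_lt_compat. apply Rmult_lt_0_compat; [apply Rmult_lt_0_compat|]; auto.
      apply Rmult_le_compat_l; nra. }
    replace (P * 2 ^ k * s ^ k / (P * INR x ^ k * INR x ^ k)) with ((N * (N + 1) / (INR x * INR x)) ^ k) in U1.
    2:{ unfold s. rewrite !pow_div_distr, !Rpow_mult_distr by nra. field. split; [apply pow_nonzero; lra|lra]. }
    assert (U2 : (N * (N + 1) / (INR x * INR x)) ^ k <= (1 + (INR k + 1) / INR x) ^ (2 * k)).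
    { rewrite pow_sqr. apply pow_incr. split. apply Rmult_le_pos; [nra|left; apply Rinv_0_lt_compat; nra].
      replace ((1 + (INR k + 1) / INR x) * (1 + (INR k + 1) / INR x)) with ((INR x + INR k + 1) * (INR x + INR k + 1) / (INR x * INR x)) by (field; lra).
      unfold Rdiv. apply Rmult_le_compat_r. left; apply Rinv_0_lt_compat; nra. rewrite HN. nra. }
    assert (U3 := pow_up_bound ((INR k + 1) / INR x) (2 * k)).
    rewrite mult_INR in U3. simpl (INR 2) in U3.
    assert (U4 : 0 <= (INR k + 1) / INR x) by (unfold Rdiv; apply Rmult_le_pos; [lra|left; apply Rinv_0_lt_compat; lra]).
    assert (U5 : 2 * INR k * ((INR k + 1) / INR x) <= d / 4).
    { apply (Rmult_le_reg_r (INR x)); [lra|]. unfold Rdiv. replace (2 * INR k * ((INR k + 1) * / INR x) * INR x) with (2 * INR k * (INR k + 1)) by (field; lra). nra. }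
    specialize (U3 U4 ltac:(lra)). lra.
Qed.

Lemma ee_G x k lst u d :
  (k <= x)%nat -> 0 < d <= 1 -> 8 * (INR k + 1) ^ 2 / d <= INR x ->
  (forall j, In j lst -> 0 <= u j <= INR (x + k)) ->
  sumR lst u = INR (x + k) * (INR (x + k) + 1) / 2 ->
  1 - d <= Gq x k (ee k lst u) <= 1 + d.
Proof. intros Hk Hd Hx Hu Hs. apply G_bounds; auto.
  rewrite <- Hs. split.
  - apply ee_lower; auto. apply pos_INR.
  - apply ee_upper. intros j Hj; apply Hu; auto.
Qed.

Lemma core r p n q d :
  (1 <= q <= n)%nat -> (2 <= n)%nat -> (n <= r)%nat -> (p <= r - n)%nat -> 0 < d <= / 9 ->
  8 * (INR n + 1) ^ 2 / d <= INR p -> 8 * (INR n + 1) ^ 2 / d <= INR (r - n - p) ->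
  2 ^ n * INR (fact (q - 1)) * INR (fact (n - q)) * INR r ^ (n - 1) <=
    d * INR p ^ (2 * (q - 1)) * INR (r - n - p) ^ (2 * (n - q)) ->
  0 < C (r - n) p * mu n q r p /\
  Rabs (sumR (choose (n - 1) (seq 1 r)) (pure_entry r n p q) / 2 - C (r - n) p * mu n q r p)
    <= 3 * d * (C (r - n) p * mu n q r p) /\
  sumR (choose (n - 1) (seq 1 r)) (pure_entry r n p q) / 2 <= 2 * (C (r - n) p * mu n q r p) /\
  F0 r n (p + q) * INR r ^ (n - 1) <= d * (C (r - n) p * mu n q r p).
Proof.
  intros Hq Hn Hr Hp Hd HP HA Htau.
  set (k1 := (q - 1)%nat) in *. set (k2 := (n - q)%nat) in *. set (a := (r - n - p)%nat) in *.
  assert (Hn8 : INR n <= 8 * (INR n + 1) ^ 2 / d).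
  { assert (0 <= INR n) by apply pos_INR. apply (Rmult_le_reg_r d); [lra|]. unfold Rdiv.
    rewrite Rmult_assoc, Rinv_l, Rmult_1_r by lra. nra. }
  assert (Hk1n : (k1 <= n)%nat) by (unfold k1; lia). assert (Hk2n : (k2 <= n)%nat) by (unfold k2; lia).
  assert (Hk1p : (k1 <= p)%nat). { apply INR_le. apply Rle_trans with (INR n). apply le_INR; auto. lra. }
  assert (Hk2a : (k2 <= a)%nat). { apply INR_le. apply Rle_trans with (INR n). apply le_INR; auto. lra. }
  assert (Hkk : forall k, (k <= n)%nat -> 8 * (INR k + 1) ^ 2 / d <= 8 * (INR n + 1) ^ 2 / d).
  { intros k Hk. unfold Rdiv. apply Rmult_le_compat_r. left; apply Rinv_0_lt_compat; lra.
    apply Rmult_le_compat_l; [lra|]. apply pow_incr. split. assert (0 <= INR k) by apply pos_INR. lra.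
    apply Rplus_le_compat_r, le_INR; auto. }
  set (D := (p + q)%nat).
  assert (ED1 : (D - 1 = p + k1)%nat) by (unfold D, k1; lia).
  assert (ED2 : (r - D = a + k2)%nat) by (unfold D, k2, a; lia).
  rewrite sum_pure by auto. fold D. rewrite ED1, ED2.
  set (e1 := ee k1 (seq 1 (p + k1)) (uD D)). set (e2 := ee k2 (seq (S D) (a + k2)) (uD D)).
  assert (G1 : 1 - d <= Gq p k1 e1 <= 1 + d).
  { apply ee_G; auto. lra. eapply Rle_trans; [apply Hkk; auto| auto].
    - intros j Hj. apply in_seq in Hj. unfold uD.
      assert (INR j <= INR D) by (apply le_INR; unfold D, k1 in *; lia).
      assert (INR D - INR j <= INR (p + k1)) by (rewrite <- minus_INR by (unfold D; lia); apply le_INR; unfold D, k1 in *; lia).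
      rewrite Rabs_minus_sym, Rabs_right; lra.
    - rewrite (sumR_ext _ _ (fun j => INR (1 + (p + k1)) - INR j)). rewrite sum_down.
      rewrite plus_INR; simpl (INR 1); ring.
      intros j Hj. apply in_seq in Hj. unfold uD. replace (1 + (p + k1))%nat with D by (unfold D, k1; lia).
      assert (INR j <= INR D) by (apply le_INR; unfold D, k1 in *; lia). rewrite Rabs_minus_sym, Rabs_right; lra. }
  assert (G2 : 1 - d <= Gq a k2 e2 <= 1 + d).
  { apply ee_G; auto. lra. eapply Rle_trans; [apply Hkk; auto| auto].
    - intros j Hj. apply in_seq in Hj. unfold uD.
      assert (INR D <= INR j) by (apply le_INR; lia).
      assert (INR j - INR D <= INR (a + k2)) by (rewrite <- minus_INR by lia; apply le_INR; lia).
      rewrite Rabs_right; lra.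
    - rewrite (sumR_ext _ _ (fun j => INR j - INR D)). rewrite sum_up. ring.
      intros j Hj. apply in_seq in Hj. unfold uD.
      assert (INR D <= INR j) by (apply le_INR; lia). rewrite Rabs_right; lra. }
  assert (HPp : 0 < INR p) by (eapply Rlt_le_trans; [|exact HP]; apply Rdiv_lt_0_compat; [|lra]; assert (0 <= INR n) by apply pos_INR; nra).
  assert (HAp : 0 < INR a) by (eapply Rlt_le_trans; [|exact HA]; apply Rdiv_lt_0_compat; [|lra]; assert (0 <= INR n) by apply pos_INR; nra).
  assert (Ef : forall m, 0 < INR (fact m)) by (intros; apply lt_0_INR, lt_O_fact).
  assert (Hmu : mu n q r p = / 2 ^ n * (INR p ^ k1 * INR a ^ k2) / (INR (fact k1) * INR (fact k2))).
  { unfold mu. fold k1 k2. replace (r - p - n)%nat with a by (unfold a; lia). reflexivity. }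
  assert (HC : C (r - n) p = INR (fact (r - n)) / (INR (fact p) * INR (fact a))).
  { unfold C. replace (r - n - p)%nat with a by (unfold a; lia). reflexivity. }
  assert (H2n : 2 ^ n = 2 * 2 ^ k1 * 2 ^ k2).
  { replace n with (S (k1 + k2)) at 1 by (unfold k1, k2; lia). simpl. rewrite pow_add. ring. }
  set (K := C (r - n) p * mu n q r p).
  assert (HK : 0 < K).
  { unfold K. rewrite HC, Hmu. assert (0 < 2 ^ n) by (apply pow_lt; lra).
    assert (0 < INR p ^ k1) by (apply pow_lt; lra). assert (0 < INR a ^ k2) by (apply pow_lt; lra).
    repeat (apply Rmult_lt_0_compat || apply Rdiv_lt_0_compat || apply Rinv_0_lt_compat); auto. }
  assert (HF0 : F0 r n D = INR (fact (r - n)) / (INR (fact (p + k1)) * INR (fact (a + k2)))).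
  { unfold F0. rewrite ED1, ED2. reflexivity. }
  assert (Hid : F0 r n D * e1 * e2 / 2 = K * Gq p k1 e1 * Gq a k2 e2).
  { unfold K. rewrite HC, Hmu, HF0, H2n. unfold Gq.
    assert (0 < 2 ^ k1) by (apply pow_lt; lra). assert (0 < 2 ^ k2) by (apply pow_lt; lra).
    assert (0 < INR p ^ k1) by (apply pow_lt; lra). assert (0 < INR a ^ k2) by (apply pow_lt; lra).
    specialize (Ef (r-n)%nat) as E0. 
    field. repeat split; try lra; try (apply Rgt_not_eq, Ef); try (apply Rgt_not_eq; apply Ef). }
  change (q - 1)%nat with k1. change (n - q)%nat with k2. fold e1 e2. rewrite Hid.
  set (g1 := Gq p k1 e1) in *. set (g2 := Gq a k2 e2) in *.
  assert (Hg : (1 - d) * (1 - d) <= g1 * g2 <= (1 + d) * (1 + d)) by (split; apply Rmult_le_compat; lra).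
  split; [auto|]. split; [|split].
  - replace (K * g1 * g2 - K) with (K * (g1 * g2 - 1)) by ring. rewrite Rabs_mult, Rabs_right by lra.
    replace (3 * d * K) with (K * (3 * d)) by ring. apply Rmult_le_compat_l; [lra|]. apply Rabs_le; nra.
  - replace (K * g1 * g2) with (K * (g1 * g2)) by ring. replace (2 * K) with (K * 2) by ring. apply Rmult_le_compat_l; [lra|]. nra.
  - clear Hid Hg. rewrite HF0.
    destruct (fact_bounds p k1) as [Fb1 _]. destruct (fact_bounds a k2) as [Fb2 _].
    set (fr := INR (fact (r - n))) in *. set (fp := INR (fact p)) in *. set (fa := INR (fact a)) in *.
    set (fp1 := INR (fact (p + k1))) in *. set (fa2 := INR (fact (a + k2))) in *.
    set (P := INR p) in *. set (A := INR a) in *.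
    assert (0 < fr) by apply Ef. assert (0 < fp) by apply Ef. assert (0 < fa) by apply Ef.
    assert (0 < INR (fact k1)) by apply Ef. assert (0 < INR (fact k2)) by apply Ef.
    assert (0 < P ^ k1) by (apply pow_lt; lra). assert (0 < A ^ k2) by (apply pow_lt; lra).
    assert (0 < 2 ^ n) by (apply pow_lt; lra). assert (0 <= INR r ^ (n - 1)) by (apply pow_le, pos_INR).
    set (X := fp * P ^ k1 * (fa * A ^ k2)).
    assert (HX : 0 < X) by (unfold X; repeat apply Rmult_lt_0_compat; auto).
    assert (Hden : X <= fp1 * fa2) by (unfold X; apply Rmult_le_compat; auto; apply Rmult_le_pos; lra).
    apply Rle_trans with (fr / X * INR r ^ (n - 1)).
    { apply Rmult_le_compat_r; auto. unfold Rdiv. apply Rmult_le_compat_l; [lra|]. apply Rinv_le_contravar; auto. }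
    replace (2 * k1)%nat with (k1 + k1)%nat in Htau by lia. replace (2 * k2)%nat with (k2 + k2)%nat in Htau by lia.
    rewrite !pow_add in Htau.
    replace (d * K) with (fr / X * (d * (P ^ k1 * P ^ k1) * (A ^ k2 * A ^ k2) / (2 ^ n * INR (fact k1) * INR (fact k2)))).
    2:{ unfold K. rewrite HC, Hmu. fold fa fp fr P A. unfold X. field. repeat split; lra. }
    apply Rmult_le_compat_l. unfold Rdiv; apply Rmult_le_pos; [lra|left; apply Rinv_0_lt_compat; auto].
    apply (Rmult_le_reg_r (2 ^ n * INR (fact k1) * INR (fact k2))). repeat apply Rmult_lt_0_compat; auto.
    replace (d * (P ^ k1 * P ^ k1) * (A ^ k2 * A ^ k2) / (2 ^ n * INR (fact k1) * INR (fact k2)) *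
      (2 ^ n * INR (fact k1) * INR (fact k2))) with (d * (P ^ k1 * P ^ k1) * (A ^ k2 * A ^ k2)) by (field; repeat split; lra).
    lra.
Qed.

Lemma Rinv_nonneg x : 0 <= x -> 0 <= / x.
Proof. intros H. destruct (Req_dec x 0) as [->|H']. rewrite Rinv_0; lra. left; apply Rinv_0_lt_compat; lra. Qed.

Lemma pure_nonneg r n p q I : 0 <= pure_entry r n p q I.
Proof. unfold pure_entry. destruct (Nat.eqb _ _); [|lra]. apply Rmult_le_pos; [apply pos_INR|].
  change (0 <= prodR (seq 0 (r - n + 1)) (fun l => if (l =? p)%nat then 1
      else / Rabs (INR (nth l (compl_r r I) O) - INR (nth p (compl_r r I) O)))).
  apply prodR_nonneg. intros l _. destruct (_ =? _)%nat; [lra|apply Rinv_nonneg, Rabs_pos]. Qed.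

Lemma pow_ge_self y m : 1 <= y -> (1 <= m)%nat -> y <= y ^ m.
Proof. intros Hy Hm. destruct m as [|m]; [lia|]. simpl. rewrite <- (Rmult_1_r y) at 1.
  apply Rmult_le_compat_l; [lra|]. apply pow_R1_Rle; auto. Qed.

Theorem mainTheorem5 (n q : nat) (c : R)
  (hn : (2 <= n)%nat) (hq1 : (1 <= q)%nat) (hqn : (q <= n)%nat)
  (hc0 : 0 < c) (hc1 : c < / 2) :
  forall eps eta : R, 0 < eps -> 0 < eta ->
  exists R0 : nat, forall r p : nat,
    (R0 <= r)%nat -> (n <= r)%nat -> (p <= r - n)%nat ->
    c <= INR p / INR r <= 1 - c ->
    exists l : R,
      is_prob (length (subsets_r r n)) (dev_event r n p q eps) l /\ l < eta.
Proof.
  intros eps eta He Heta.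
  set (d := Rmin (/ 9) (eta * eps ^ 2 / 2)).
  assert (Hd : 0 < d <= / 9). { unfold d. split. apply Rmin_glb_lt. lra. apply Rdiv_lt_0_compat; [|lra]. apply Rmult_lt_0_compat; [lra| apply pow_lt; lra]. apply Rmin_l. }
  assert (Hd2 : d <= eta * eps ^ 2 / 2) by apply Rmin_r.
  set (X := 8 * (INR n + 1) ^ 2 / d).
  set (Cst := 2 ^ n * INR (fact (q - 1)) * INR (fact (n - q))).
  assert (HX : 0 <= X). { unfold X. apply Rmult_le_pos. assert (0 <= INR n) by apply pos_INR. nra. left; apply Rinv_0_lt_compat; lra. }
  assert (HCst : 0 < Cst). { unfold Cst. repeat apply Rmult_lt_0_compat. apply pow_lt; lra. apply lt_0_INR, lt_O_fact. apply lt_0_INR, lt_O_fact. }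
  assert (Hn0 : 2 <= INR n) by (replace 2 with (INR 2) by (simpl; ring); apply le_INR; auto).
  assert (Hc2 : 0 < c * c) by nra.
  set (t1 := (X + INR n) / c). set (t2 := 2 * INR n / c). set (t3 := 4 / (c * c)). set (t4 := 4 * Cst / (c * c * d)).
  assert (T1 : 0 <= t1) by (unfold t1, Rdiv; apply Rmult_le_pos; [lra|apply Rinv_nonneg; lra]).
  assert (T2 : 0 <= t2) by (unfold t2, Rdiv; apply Rmult_le_pos; [lra|apply Rinv_nonneg; lra]).
  assert (T3 : 0 <= t3) by (unfold t3, Rdiv; apply Rmult_le_pos; [lra|apply Rinv_nonneg; lra]).
  assert (T4 : 0 <= t4) by (unfold t4, Rdiv; apply Rmult_le_pos; [lra|apply Rinv_nonneg; nra]).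
  destruct (INR_unbounded (t1 + t2 + t3 + t4 + 1)) as [R0 HR0].
  exists R0. intros r p Hr0 Hnr Hp [Hpc1 Hpc2].
  assert (HR : t1 + t2 + t3 + t4 + 1 < INR r) by (apply Rlt_le_trans with (INR R0); [lra| apply le_INR; auto]).
  set (R := INR r) in *. assert (HRpos : 0 < R) by lra.
  set (P := INR p) in *.
  assert (HP1 : c * R <= P). { apply (Rmult_le_compat_r R) in Hpc1; [|lra]. unfold Rdiv in Hpc1. rewrite Rmult_assoc, Rinv_l, Rmult_1_r in Hpc1 by lra. lra. }
  assert (HP2 : P <= (1 - c) * R). { apply (Rmult_le_compat_r R) in Hpc2; [|lra]. unfold Rdiv in Hpc2. rewrite Rmult_assoc, Rinv_l, Rmult_1_r in Hpc2 by lra. lra. }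
  assert (U1 : X + INR n <= c * R). { assert (t1 <= R) by lra. unfold t1 in *. apply (Rmult_le_compat_l c) in H; [|lra].
    replace (c * ((X + INR n) / c)) with (X + INR n) in H by (field; lra). lra. }
  assert (U2 : 2 * INR n <= c * R). { assert (t2 <= R) by lra. unfold t2 in *. apply (Rmult_le_compat_l c) in H; [|lra].
    replace (c * (2 * INR n / c)) with (2 * INR n) in H by (field; lra). lra. }
  assert (U3 : 1 <= c * c * R / 4). { assert (t3 <= R) by lra. unfold t3 in *. apply (Rmult_le_compat_l (c * c)) in H; [|lra].
    replace (c * c * (4 / (c * c))) with 4 in H by (field; lra). lra. }
  assert (U4 : Cst / d <= c * c * R / 4). { assert (t4 <= R) by lra. unfold t4 in *. apply (Rmult_le_compat_l (c * c * d / 4)) in H; [|nra].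
    replace (c * c * d / 4 * (4 * Cst / (c * c * d))) with Cst in H by (field; lra).
    apply (Rmult_le_reg_r d); [lra|]. unfold Rdiv. rewrite Rmult_assoc, Rinv_l by lra. lra. }
  assert (HA : INR (r - n - p) = R - INR n - P). { rewrite minus_INR by lia. rewrite minus_INR by lia. reflexivity. }
  set (A := INR (r - n - p)) in *.
  assert (HPX : X <= P) by lra. assert (HAX : X <= A) by lra.
  set (h := c * R / 2). assert (Hh : 0 < h) by (unfold h; nra).
  assert (HhP : h <= P) by (unfold h; lra). assert (HhA : h <= A) by (unfold h; lra).
  assert (Htau : Cst * R ^ (n - 1) <= d * P ^ (2 * (q - 1)) * A ^ (2 * (n - q))).
  { assert (E1 : h ^ (2 * (q - 1)) <= P ^ (2 * (q - 1))) by (apply pow_incr; lra).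
    assert (E2 : h ^ (2 * (n - q)) <= A ^ (2 * (n - q))) by (apply pow_incr; lra).
    assert (E3 : h ^ (2 * (q - 1)) * h ^ (2 * (n - q)) = R ^ (n - 1) * (c * c * R / 4) ^ (n - 1)).
    { rewrite <- pow_add. replace (2 * (q - 1) + 2 * (n - q))%nat with (2 * (n - 1))%nat by lia.
      rewrite pow_sqr, <- Rpow_mult_distr. f_equal. unfold h. field. }
    assert (E4 : c * c * R / 4 <= (c * c * R / 4) ^ (n - 1)) by (apply pow_ge_self; [lra|lia]).
    assert (0 < R ^ (n - 1)) by (apply pow_lt; lra).
    assert (0 <= h ^ (2 * (q - 1))) by (apply pow_le; lra). assert (0 <= h ^ (2 * (n - q))) by (apply pow_le; lra).
    assert (E5 : h ^ (2 * (q - 1)) * h ^ (2 * (n - q)) <= P ^ (2 * (q - 1)) * A ^ (2 * (n - q))) by (apply Rmult_le_compat; auto).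
    assert (E6 : Cst <= d * (c * c * R / 4)).
    { apply (Rmult_le_compat_l d) in U4; [|lra]. replace (d * (Cst / d)) with Cst in U4 by (field; lra). auto. }
    apply Rle_trans with (d * (R ^ (n - 1) * (c * c * R / 4) ^ (n - 1))).
    - replace (d * (R ^ (n - 1) * (c * c * R / 4) ^ (n - 1))) with (R ^ (n - 1) * (d * (c * c * R / 4) ^ (n - 1))) by ring.
      rewrite Rmult_comm. apply Rmult_le_compat_l; [lra|]. apply Rle_trans with (d * (c * c * R / 4)); auto.
      apply Rmult_le_compat_l; lra.
    - rewrite <- E3. rewrite Rmult_assoc. apply Rmult_le_compat_l; lra. }
  destruct (core r p n q d ltac:(lia) hn Hnr Hp Hd HPX HAX Htau) as [HK [Hm1 [Hm2 Hm3]]].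
  set (K := C (r - n) p * mu n q r p) in *.
  set (S := subsets_r r n).
  set (w := fun j => pure_entry r n p q (nth j S [])).
  destruct (prob_bound (length S) w (betti_rand r n p q) (dev_event r n p q eps) K eps) as [l [Hl Hlb]].
  - intros j; apply pure_nonneg.
  - auto.
  - auto.
  - intros m g Hg. unfold betti_rand. cbv zeta. fold S. rewrite <- Hg. apply (gs_betti w m g).
  - intros x; reflexivity.
  - exists l. split; auto.
    assert (ESw : sumR (seq 0 (length S)) w = sumR (choose (n - 1) (seq 1 r)) (pure_entry r n p q)).
    { unfold w. rewrite (sumR_nth _ []). reflexivity. }
    rewrite ESw in Hlb.
    set (sw := sumR (choose (n - 1) (seq 1 r)) (pure_entry r n p q)) in *.
    assert (Hsw : 0 <= sw) by (apply sumR_nonneg; intros; apply pure_nonneg).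
    assert (HV : sumR (seq 0 (length S)) (fun j => w j ^ 2) <= d * K * sw).
    { rewrite <- ESw, <- sumR_scal. apply sumR_le. intros j Hj. apply in_seq in Hj.
      assert (HI : In (nth j S []) (choose (n - 1) (seq 1 r))) by (change (choose (n - 1) (seq 1 r)) with S; apply nth_In; lia).
      destruct (pure_bound r n p q (nth j S []) ltac:(lia) Hnr Hp HI) as [W1 W2].
      fold (w j) in W1, W2. assert (w j <= d * K) by lra. simpl. nra. }
    assert (Hnum : (sw / 2 - K) ^ 2 + sumR (seq 0 (length S)) (fun j => w j ^ 2) / 12 <= 4 * d / 3 * K ^ 2).
    { assert (Q1 : (sw / 2 - K) ^ 2 <= (3 * d * K) ^ 2).
      { rewrite <- pow2_abs. apply pow_incr. split; [apply Rabs_pos|auto]. }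
      assert (Q2 : (3 * d * K) ^ 2 <= d * K ^ 2). { simpl. assert (0 < K * K) by nra. nra. }
      assert (Q3 : d * K * sw <= d * K * (4 * K)) by (apply Rmult_le_compat_l; nra).
      simpl in *. nra. }
    assert (HeK : 0 < (eps * K) ^ 2) by (apply pow_lt; nra).
    apply Rle_lt_trans with (4 * d / 3 * K ^ 2 / (eps * K) ^ 2).
    + eapply Rle_trans; [exact Hlb|]. unfold Rdiv. apply Rmult_le_compat_r; [left; apply Rinv_0_lt_compat; auto|auto].
    + replace (4 * d / 3 * K ^ 2 / (eps * K) ^ 2) with (4 * d / (3 * eps ^ 2)) by (field; lra).
      assert (0 < eps ^ 2) by (apply pow_lt; lra).
      apply (Rmult_lt_reg_r (3 * eps ^ 2)); [lra|]. unfold Rdiv. rewrite Rmult_assoc, Rinv_l by lra. nra.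
Qed.
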